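(* Let $f:\mathbb{R}^n\to\mathbb{R}^l$ be continuously differentiable, let $C\subset\mathbb{R}^l$ be closed and subamenable at $f(\bar x)\in C$, and suppose $F(x):=f(x)-C$ is metrically subregular at $(\bar x,0)$. Then $$\operatorname{subreg}F(\bar x,0)=\limsup_{x\to\bar x,\ x\in f^{-1}(C)}\ \sup_{v\in N_{f^{-1}(C)}(x)\cap\mathbb{B}_{\mathbb{R}^n}}\inf\{\|\lambda\|:\lambda\in N_C(f(x)),\ \nabla f(x)^T\lambda=v\}$$ $$=\limsup_{x\to\bar x,\ x\in f^{-1}(C)}\inf\{\tau\ge0: N_{f^{-1}(C)}(x)\cap\mathbb{B}_{\mathbb{R}^n}\subset\tau\,\nabla f(x)^T(N_C(f(x))\cap\mathbb{B}_{\mathbb{R}^l})\}$$ $$=\limsup_{x\to\bar x,\ x\in f^{-1}(C)}\inf\{\tau\ge0: N_{f^{-1}(C)}(x)\cap\mathbb{B}_{\mathbb{R}^n}\subset\tau\,D^*F(x,0)(\mathbb{B}_{\mathbb{R}^l})\},$$ where $D^*F(x,0)(\lambda):=\{\nabla f(x)^T\lambda\}$ if $\lambda\in N_C(f(x))$ and $D^*F(x,0)(\lambda):=\emptyset$ otherwise.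
   Context: $\operatorname{subreg}F(\bar x,0)$ is the infimum of all $\kappa\ge0$ for which there is a neighborhood $U$ of $\bar x$ with $\operatorname{dist}(x;f^{-1}(C))\le\kappa\operatorname{dist}(f(x);C)$ for all $x\in U$ (metric subregularity of $F$ at $(\bar x,0)$ means some such $\kappa$ exists). $N$ denotes the limiting normal cone; $\mathbb{B}$ the closed unit ball; $\limsup_{x\to\bar x,x\in S}h(x)=\lim_{\varepsilon\downarrow0}\sup\{h(x):x\in S,\|x-\bar x\|<\varepsilon\}$; $\inf\emptyset=+\infty$. A set $C$ is subamenable at $\bar z\in C$ if there are a neighborhood $W$ of $\bar z$, a $\mathcal C^1$ map $q:W\to\mathbb{R}^d$ and a closed convex set $Q\subset\mathbb{R}^d$ with $C\cap W=\{z\in W: q(z)\in Q\}$ and $z\mapsto q(z)-Q$ metrically subregular at $(\bar z,0)$. *)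

(* Defs.v *)
From Stdlib Require Import Reals Lra Classical ClassicalEpsilon FunctionalExtensionality.
From Stdlib Require Fin.
Open Scope R_scope.

Definition vec (n : nat) := Fin.t n -> R.
Definition mat (l n : nat) := Fin.t l -> Fin.t n -> R.

Fixpoint sumF (n : nat) : (Fin.t n -> R) -> R :=
  match n return (Fin.t n -> R) -> R with
  | O => fun _ => 0
  | S m => fun g => g (@Fin.F1 m) + sumF m (fun i => g (Fin.FS i))
  end.

Definition vadd {n} (x y : vec n) : vec n := fun i => x i + y i.
Definition vsub {n} (x y : vec n) : vec n := fun i => x i - y i.
Definition vscal {n} (a : R) (x : vec n) : vec n := fun i => a * x i.
Definition inner {n} (x y : vec n) : R := sumF n (fun i => x i * y i).
Definition vnorm {n} (x : vec n) : R := sqrt (inner x x).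

Definition mapply {l n} (A : mat l n) (x : vec n) : vec l :=
  fun i => sumF n (fun j => A i j * x j).
Definition mtapply {l n} (A : mat l n) (y : vec l) : vec n :=
  fun j => sumF l (fun i => A i j * y i).

Inductive Rbar := Finite (r : R) | p_infty | m_infty.

Definition Rbar_le (a b : Rbar) : Prop :=
  match a, b with
  | m_infty, _ => True
  | _, p_infty => True
  | Finite x, Finite y => x <= y
  | _, _ => False
  end.

Definition is_lub_Rbar (E : Rbar -> Prop) (s : Rbar) : Prop :=
  (forall x, E x -> Rbar_le x s) /\
  (forall u, (forall x, E x -> Rbar_le x u) -> Rbar_le s u).
Definition is_glb_Rbar (E : Rbar -> Prop) (s : Rbar) : Prop :=
  (forall x, E x -> Rbar_le s x) /\
  (forall u, (forall x, E x -> Rbar_le u x) -> Rbar_le u s).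

(* sup / inf in the extended reals (inf of the empty set is +oo) *)
Definition Rbar_sup (E : Rbar -> Prop) : Rbar :=
  epsilon (inhabits p_infty) (is_lub_Rbar E).
Definition Rbar_inf (E : Rbar -> Prop) : Rbar :=
  epsilon (inhabits p_infty) (is_glb_Rbar E).

(* scaling by a nonnegative real kappa *)
Definition Rbar_scal (k : R) (a : Rbar) : Rbar :=
  match a with
  | Finite x => Finite (k * x)
  | p_infty => p_infty
  | m_infty => m_infty
  end.

Definition is_open {n} (W : vec n -> Prop) : Prop :=
  forall z, W z -> exists r, 0 < r /\ forall y, vnorm (vsub y z) < r -> W y.

Definition seq_conv {n} (u : nat -> vec n) (x : vec n) : Prop :=
  forall eps, 0 < eps -> exists N, forall k, (N <= k)%nat -> vnorm (vsub (u k) x) < eps.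

Definition is_closed {n} (S : vec n -> Prop) : Prop :=
  forall (u : nat -> vec n) x, (forall k, S (u k)) -> seq_conv u x -> S x.

Definition is_convex {n} (S : vec n -> Prop) : Prop :=
  forall x y t, S x -> S y -> 0 <= t <= 1 ->
    S (vadd (vscal t x) (vscal (1 - t) y)).

Definition dist {n} (x : vec n) (S : vec n -> Prop) : Rbar :=
  Rbar_inf (fun t => exists y, S y /\ t = Finite (vnorm (vsub x y))).

Definition reg_normal {n} (S : vec n -> Prop) (x v : vec n) : Prop :=
  S x /\ forall eps, 0 < eps -> exists delta, 0 < delta /\
    forall y, S y -> vnorm (vsub y x) < delta ->
      inner v (vsub y x) <= eps * vnorm (vsub y x).

(* limiting (Mordukhovich) normal cone N_S(x); empty if x is not in S *)
Definition lim_normal {n} (S : vec n -> Prop) (x v : vec n) : Prop :=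
  S x /\ exists (xk vk : nat -> vec n),
    (forall k, S (xk k)) /\ seq_conv xk x /\ seq_conv vk v /\
    (forall k, reg_normal S (xk k) (vk k)).

Definition C1_on {n m} (W : vec n -> Prop) (g : vec n -> vec m) (Dg : vec n -> mat m n) : Prop :=
  (forall x, W x -> forall eps, 0 < eps -> exists delta, 0 < delta /\
     forall y, vnorm (vsub y x) < delta ->
       vnorm (vsub (vsub (g y) (g x)) (mapply (Dg x) (vsub y x))) <= eps * vnorm (vsub y x)) /\
  (forall x, W x -> forall eps, 0 < eps -> exists delta, 0 < delta /\
     forall y, W y -> vnorm (vsub y x) < delta ->
       forall i j, Rabs (Dg y i j - Dg x i j) < eps).

Definition is_C1 {n m} (g : vec n -> vec m) (Dg : vec n -> mat m n) : Prop :=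
  C1_on (fun _ => True) g Dg.

Definition preimage {n m} (g : vec n -> vec m) (K : vec m -> Prop) : vec n -> Prop :=
  fun x => K (g x).

Definition subreg_bound {n m} (g : vec n -> vec m) (D : vec n -> Prop) (K : vec m -> Prop)
    (xb : vec n) (kappa : R) : Prop :=
  exists delta, 0 < delta /\ forall x, vnorm (vsub x xb) < delta ->
    Rbar_le (dist x (fun y => D y /\ K (g y))) (Rbar_scal kappa (dist (g x) K)).

(* metric subregularity of x |-> g(x) - K (g restricted to D) at (xb, 0) *)
Definition metric_subregular {n m} (g : vec n -> vec m) (D : vec n -> Prop)
    (K : vec m -> Prop) (xb : vec n) : Prop :=
  exists kappa, 0 <= kappa /\ subreg_bound g D K xb kappa.

Definition subreg_modulus {n l} (f : vec n -> vec l) (C : vec l -> Prop) (xb : vec n) : Rbar :=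
  Rbar_inf (fun t => exists kappa, t = Finite kappa /\ 0 <= kappa /\
                     subreg_bound f (fun _ => True) C xb kappa).

Definition subamenable {l} (C : vec l -> Prop) (zb : vec l) : Prop :=
  C zb /\
  exists (W : vec l -> Prop) (d : nat) (q : vec l -> vec d) (Dq : vec l -> mat d l)
         (Q : vec d -> Prop),
    is_open W /\ W zb /\ C1_on W q Dq /\ is_closed Q /\ is_convex Q /\
    (forall z, W z -> (C z <-> Q (q z))) /\
    metric_subregular q W Q zb.

(* limsup_{x -> xb, x in S} h(x) = lim_{eps -> 0+} sup {h x : x in S, |x - xb| < eps};
   the sup is nonincreasing in eps, so this limit is the inf over eps > 0. *)
Definition limsup_at {n} (S : vec n -> Prop) (xb : vec n) (h : vec n -> Rbar) : Rbar :=
  Rbar_inf (fun t => exists eps, 0 < eps /\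
    t = Rbar_sup (fun s => exists x, S x /\ vnorm (vsub x xb) < eps /\ s = h x)).

Definition coderivF {n l} (f : vec n -> vec l) (Df : vec n -> mat l n) (C : vec l -> Prop)
    (x : vec n) (lam : vec l) (w : vec n) : Prop :=
  lim_normal C (f x) lam /\ w = mtapply (Df x) lam.

Definition h1 {n l} (f : vec n -> vec l) (Df : vec n -> mat l n) (C : vec l -> Prop)
    (x : vec n) : Rbar :=
  Rbar_sup (fun s => exists v, lim_normal (preimage f C) x v /\ vnorm v <= 1 /\
    s = Rbar_inf (fun t => exists lam, lim_normal C (f x) lam /\
                     mtapply (Df x) lam = v /\ t = Finite (vnorm lam))).

Definition h2 {n l} (f : vec n -> vec l) (Df : vec n -> mat l n) (C : vec l -> Prop)
    (x : vec n) : Rbar :=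
  Rbar_inf (fun t => exists tau, t = Finite tau /\ 0 <= tau /\
    forall v, lim_normal (preimage f C) x v -> vnorm v <= 1 ->
      exists lam, lim_normal C (f x) lam /\ vnorm lam <= 1 /\
                  v = vscal tau (mtapply (Df x) lam)).

Definition h3 {n l} (f : vec n -> vec l) (Df : vec n -> mat l n) (C : vec l -> Prop)
    (x : vec n) : Rbar :=
  Rbar_inf (fun t => exists tau, t = Finite tau /\ 0 <= tau /\
    forall v, lim_normal (preimage f C) x v -> vnorm v <= 1 ->
      exists lam w, vnorm lam <= 1 /\ coderivF f Df C x lam w /\ v = vscal tau w).

(* Main.v *)
Require Import Defs.
From Stdlib Require Import Reals Lra Lia Classical ClassicalEpsilon FunctionalExtensionality PropExtensionality.
From Stdlib Require Fin.
Import Defs.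
Open Scope R_scope.

Lemma sumF_ext n (f g : Fin.t n -> R) : (forall i, f i = g i) -> sumF n f = sumF n g.
Proof. revert f g; induction n; simpl; intros f g H; [reflexivity|].
  rewrite H, (IHn (fun i => f (Fin.FS i)) (fun i => g (Fin.FS i))); auto. Qed.

Lemma sumF_plus n (f g : Fin.t n -> R) : sumF n (fun i => f i + g i) = sumF n f + sumF n g.
Proof. revert f g; induction n; simpl; intros f g; [ring|].
  rewrite (IHn (fun i => f (Fin.FS i)) (fun i => g (Fin.FS i))); ring. Qed.

Lemma sumF_scal n c (f : Fin.t n -> R) : sumF n (fun i => c * f i) = c * sumF n f.
Proof. revert f; induction n; simpl; intros f; [ring|].
  rewrite (IHn (fun i => f (Fin.FS i))); ring. Qed.

Lemma sumF_const n c : sumF n (fun _ => c) = INR n * c.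
Proof. induction n; simpl sumF; [simpl; ring|]. rewrite IHn, S_INR; ring. Qed.

Lemma sumF_zero n : sumF n (fun _ => 0) = 0.
Proof. rewrite sumF_const; ring. Qed.

Lemma sumF_minus n (f g : Fin.t n -> R) : sumF n (fun i => f i - g i) = sumF n f - sumF n g.
Proof. revert f g; induction n; simpl; intros f g; [ring|].
  rewrite (IHn (fun i => f (Fin.FS i)) (fun i => g (Fin.FS i))); ring. Qed.

Lemma sumF_le n (f g : Fin.t n -> R) : (forall i, f i <= g i) -> sumF n f <= sumF n g.
Proof. revert f g; induction n; simpl; intros f g H; [lra|].
  pose proof (IHn (fun i => f (Fin.FS i)) (fun i => g (Fin.FS i)) (fun i => H _)).
  pose proof (H Fin.F1); lra. Qed.

Lemma sumF_nonneg n (f : Fin.t n -> R) : (forall i, 0 <= f i) -> 0 <= sumF n f.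
Proof. intros H. rewrite <- (sumF_zero n). apply sumF_le; auto. Qed.

Lemma sumF_abs n (f : Fin.t n -> R) : Rabs (sumF n f) <= sumF n (fun i => Rabs (f i)).
Proof. revert f; induction n; simpl; intros f.
  - rewrite Rabs_R0; lra.
  - eapply Rle_trans; [apply Rabs_triang|].
    pose proof (IHn (fun i => f (Fin.FS i))); lra. Qed.

Lemma sumF_swap n l (F : Fin.t l -> Fin.t n -> R) :
  sumF n (fun j => sumF l (fun i => F i j)) = sumF l (fun i => sumF n (fun j => F i j)).
Proof. revert l F; induction n; intros l F; simpl.
  - rewrite sumF_zero. reflexivity.
  - rewrite (IHn l (fun i j => F i (Fin.FS j))). rewrite <- sumF_plus. reflexivity. Qed.

Lemma sumF_term_le n (f : Fin.t n -> R) i : (forall i, 0 <= f i) -> f i <= sumF n f.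
Proof. induction i; intros H; simpl.
  - pose proof (sumF_nonneg n (fun i => f (Fin.FS i)) (fun i => H _)); lra.
  - pose proof (IHi (fun i => f (Fin.FS i)) (fun i => H _)). pose proof (H Fin.F1); lra. Qed.

Lemma inner_comm n (x y : vec n) : inner x y = inner y x.
Proof. unfold inner; apply sumF_ext; intros; ring. Qed.

Lemma inner_add_l n (x y z : vec n) : inner (vadd x y) z = inner x z + inner y z.
Proof. unfold inner, vadd. rewrite <- sumF_plus. apply sumF_ext; intros; ring. Qed.

Lemma inner_sub_l n (x y z : vec n) : inner (vsub x y) z = inner x z - inner y z.
Proof. unfold inner, vsub. rewrite <- sumF_minus. apply sumF_ext; intros; ring. Qed.

Lemma inner_scal_l n a (x z : vec n) : inner (vscal a x) z = a * inner x z.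
Proof. unfold inner, vscal. rewrite <- sumF_scal. apply sumF_ext; intros; ring. Qed.

Lemma inner_add_r n (x y z : vec n) : inner z (vadd x y) = inner z x + inner z y.
Proof. rewrite !(inner_comm _ z). apply inner_add_l. Qed.
Lemma inner_sub_r n (x y z : vec n) : inner z (vsub x y) = inner z x - inner z y.
Proof. rewrite !(inner_comm _ z). apply inner_sub_l. Qed.
Lemma inner_scal_r n a (x z : vec n) : inner z (vscal a x) = a * inner z x.
Proof. rewrite !(inner_comm _ z). apply inner_scal_l. Qed.

Lemma inner_self_nonneg n (x : vec n) : 0 <= inner x x.
Proof. unfold inner. apply sumF_nonneg. intros; nra. Qed.

Lemma vnorm_nonneg n (x : vec n) : 0 <= vnorm x.
Proof. apply sqrt_pos. Qed.

Lemma vnorm_sq n (x : vec n) : vnorm x * vnorm x = inner x x.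
Proof. apply sqrt_sqrt, inner_self_nonneg. Qed.

Lemma vnorm_eq_sqrt n (x : vec n) r : 0 <= r -> r * r = inner x x -> vnorm x = r.
Proof. intros H1 H2. unfold vnorm. rewrite <- H2. apply sqrt_square; auto. Qed.

Lemma cs_aux (a b c : R) : 0 <= a -> 0 <= c -> (forall t, 0 <= a - 2*t*b + t*t*c) -> b*b <= a*c.
Proof. intros Ha Hc H.
  destruct (Req_dec c 0) as [E|E].
  - subst c. destruct (Req_dec b 0) as [Eb|Eb]; [subst; nra|].
    specialize (H ((a+1)/(2*b))). exfalso.
    assert (2 * ((a + 1) / (2 * b)) * b = a + 1) by (field; auto). nra.
  - specialize (H (b/c)).
    assert (2 * (b / c) * b = 2 * (b*b/c)) by (field; auto).
    assert (b / c * (b / c) * c = b*b/c) by (field; auto).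
    assert (b*b/c <= a) by lra.
    assert (0 < c) by lra.
    apply (Rmult_le_compat_r c) in H2; [|lra].
    replace (b*b/c*c) with (b*b) in H2 by (field; auto). lra. Qed.

Lemma cauchy_schwarz n (x y : vec n) : Rabs (inner x y) <= vnorm x * vnorm y.
Proof.
  assert (Hq : inner x y * inner x y <= inner x x * inner y y).
  { apply cs_aux; try apply inner_self_nonneg. intros t.
    pose proof (inner_self_nonneg n (vsub x (vscal t y))).
    rewrite inner_sub_l, !inner_sub_r, !inner_scal_l, !inner_scal_r in H.
    rewrite (inner_comm _ y x) in H. nra. }
  rewrite <- !vnorm_sq in Hq.
  pose proof (vnorm_nonneg n x); pose proof (vnorm_nonneg n y).
  assert (Rabs (inner x y) * Rabs (inner x y) = inner x y * inner x y) by (rewrite <- Rabs_mult; apply Rabs_right; nra).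
  pose proof (Rabs_pos (inner x y)).
  set (P := vnorm x * vnorm y). assert (0 <= P) by (unfold P; nra).
  assert (P * P = vnorm x * vnorm x * (vnorm y * vnorm y)) by (unfold P; ring).
  destruct (Rle_dec (Rabs (inner x y)) P); auto. nra. Qed.

Lemma inner_le n (x y : vec n) : inner x y <= vnorm x * vnorm y.
Proof. pose proof (cauchy_schwarz n x y). pose proof (Rle_abs (inner x y)). lra. Qed.

Lemma vnorm_triangle n (x y : vec n) : vnorm (vadd x y) <= vnorm x + vnorm y.
Proof.
  pose proof (vnorm_nonneg n x); pose proof (vnorm_nonneg n y).
  pose proof (vnorm_nonneg n (vadd x y)).
  assert (vnorm (vadd x y) * vnorm (vadd x y) <= (vnorm x + vnorm y) * (vnorm x + vnorm y)).
  { rewrite vnorm_sq, inner_add_l, !inner_add_r.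
    pose proof (inner_le n x y). rewrite (inner_comm _ y x).
    pose proof (vnorm_sq n x); pose proof (vnorm_sq n y). nra. }
  nra. Qed.

Lemma vnorm_scal n a (x : vec n) : vnorm (vscal a x) = Rabs a * vnorm x.
Proof. apply vnorm_eq_sqrt.
  - pose proof (Rabs_pos a); pose proof (vnorm_nonneg n x); nra.
  - rewrite inner_scal_l, inner_scal_r, <- vnorm_sq.
    replace (Rabs a * vnorm x * (Rabs a * vnorm x)) with ((Rabs a * Rabs a) * (vnorm x * vnorm x)) by ring.
    rewrite <- Rabs_mult, Rabs_right by nra. ring. Qed.

Ltac vext := apply functional_extensionality; intro; unfold vsub, vadd, vscal; cbv beta; ring.

Lemma vnorm_sub_comm n (x y : vec n) : vnorm (vsub x y) = vnorm (vsub y x).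
Proof. replace (vsub x y) with (vscal (-1) (vsub y x)) by vext.
  rewrite vnorm_scal. replace (Rabs (-1)) with 1 by (rewrite Rabs_left by lra; ring). ring. Qed.

Lemma vnorm_sub_triangle n (x y z : vec n) : vnorm (vsub x z) <= vnorm (vsub x y) + vnorm (vsub y z).
Proof. replace (vsub x z) with (vadd (vsub x y) (vsub y z)) by vext. apply vnorm_triangle. Qed.

Lemma vnorm_coord n (x : vec n) i : Rabs (x i) <= vnorm x.
Proof. rewrite <- sqrt_Rsqr_abs. apply sqrt_le_1_alt. unfold Rsqr.
  apply (sumF_term_le n (fun i => x i * x i)). intros; nra. Qed.

Lemma vnorm_le_sumabs n (x : vec n) : vnorm x <= sumF n (fun i => Rabs (x i)).
Proof. revert x; induction n; intros x.
  - unfold vnorm, inner; simpl. rewrite sqrt_0; lra.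
  - simpl. specialize (IHn (fun i => x (Fin.FS i))).
    unfold vnorm, inner in *. simpl.
    set (T := sumF n (fun i => x (Fin.FS i) * x (Fin.FS i))) in *.
    assert (0 <= T) by (apply sumF_nonneg; intros; nra).
    pose proof (sqrt_pos T). pose proof (Rabs_pos (x Fin.F1)).
    apply Rle_trans with (Rabs (x Fin.F1) + sqrt T); [|lra].
    rewrite <- (sqrt_square (Rabs (x Fin.F1) + sqrt T)) by lra.
    apply sqrt_le_1_alt.
    assert (Rabs (x Fin.F1) * Rabs (x Fin.F1) = x Fin.F1 * x Fin.F1) by (rewrite <- Rabs_mult; apply Rabs_right; nra).
    pose proof (sqrt_sqrt T H). nra. Qed.

Lemma vnorm_zero n : vnorm (fun _ : Fin.t n => 0) = 0.
Proof. apply vnorm_eq_sqrt; [lra|]. unfold inner.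
  transitivity (sumF n (fun _ => 0)). rewrite sumF_zero; ring. apply sumF_ext; intros; ring. Qed.

Lemma vnorm_sub_self n (x : vec n) : vnorm (vsub x x) = 0.
Proof. replace (vsub x x) with (fun _ : Fin.t n => 0) by vext. apply vnorm_zero. Qed.

Lemma vnorm_eq0 n (x : vec n) : vnorm x = 0 -> x = (fun _ => 0).
Proof. intros H. apply functional_extensionality; intro i.
  pose proof (vnorm_coord n x i). rewrite H in H0. pose proof (Rabs_pos (x i)).
  destruct (Req_dec (x i) 0); auto. pose proof (Rabs_pos_lt _ H2). lra. Qed.

Definition mnorm {l n} (A : mat l n) : R := sumF l (fun i => sumF n (fun j => Rabs (A i j))).

Lemma mnorm_nonneg l n (A : mat l n) : 0 <= mnorm A.
Proof. apply sumF_nonneg; intros; apply sumF_nonneg; intros; apply Rabs_pos. Qed.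

Lemma mapply_bound l n (A : mat l n) h : vnorm (mapply A h) <= mnorm A * vnorm h.
Proof. eapply Rle_trans; [apply vnorm_le_sumabs|]. unfold mnorm. rewrite Rmult_comm, <- sumF_scal.
  apply sumF_le; intros i. unfold mapply. eapply Rle_trans; [apply sumF_abs|].
  rewrite <- sumF_scal. apply sumF_le; intros j. rewrite Rabs_mult.
  pose proof (vnorm_coord n h j). pose proof (Rabs_pos (A i j)). nra. Qed.

Lemma mtapply_bound l n (A : mat l n) lam : vnorm (mtapply A lam) <= mnorm A * vnorm lam.
Proof. eapply Rle_trans; [apply vnorm_le_sumabs|]. unfold mnorm. 
  rewrite <- (sumF_swap n l (fun i j => Rabs (A i j))).
  rewrite Rmult_comm, <- sumF_scal.
  apply sumF_le; intros j. unfold mtapply. eapply Rle_trans; [apply sumF_abs|].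
  rewrite <- sumF_scal. apply sumF_le; intros i. rewrite Rabs_mult.
  pose proof (vnorm_coord l lam i). pose proof (Rabs_pos (A i j)). nra. Qed.

Lemma inner_mtapply l n (A : mat l n) lam h : inner (mtapply A lam) h = inner lam (mapply A h).
Proof. unfold inner, mtapply, mapply.
  transitivity (sumF n (fun j => sumF l (fun i => A i j * lam i * h j))).
  { apply sumF_ext; intro j. rewrite Rmult_comm, <- sumF_scal. apply sumF_ext; intros; ring. }
  rewrite (sumF_swap n l (fun i j => A i j * lam i * h j)).
  apply sumF_ext; intro i. rewrite <- sumF_scal. apply sumF_ext; intros; ring. Qed.

Lemma Rbar_le_refl a : Rbar_le a a.
Proof. destruct a; simpl; auto; lra. Qed.

Lemma Rbar_le_trans a b c : Rbar_le a b -> Rbar_le b c -> Rbar_le a c.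
Proof. destruct a, b, c; simpl; auto; try lra; tauto. Qed.

Lemma Rbar_le_antisym a b : Rbar_le a b -> Rbar_le b a -> a = b.
Proof. destruct a, b; simpl; try tauto. intros; f_equal; lra. Qed.

Lemma glb_exists (E : Rbar -> Prop) : exists s, is_glb_Rbar E s.
Proof.
  destruct (classic (E m_infty)) as [Hm|Hm].
  { exists m_infty. split; [intros; simpl; auto|]. intros u Hu. apply Hu; auto. }
  destruct (classic (exists r, E (Finite r))) as [[r0 Hr0]|Hno].
  2:{ exists p_infty. split.
      - intros x Hx. destruct x; simpl; auto. exfalso; apply Hno; eauto.
      - intros u _. destruct u; simpl; auto. }
  destruct (classic (exists b, forall r, E (Finite r) -> b <= r)) as [[b Hb]|Hnb].
  - set (G := fun y => E (Finite (- y))).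
    assert (HG : bound G). { exists (-b). intros y Hy. apply Hb in Hy. lra. }
    assert (HG2 : exists y, G y). { exists (-r0). unfold G. rewrite Ropp_involutive; auto. }
    destruct (completeness G HG HG2) as [m [Hm1 Hm2]].
    exists (Finite (-m)). split.
    + intros x Hx. destruct x as [r| |]; simpl; auto; try tauto.
      assert (G (-r)) by (unfold G; rewrite Ropp_involutive; auto).
        apply Hm1 in H. lra.
    + intros u Hu. destruct u as [a| |]; simpl; auto.
      * assert (m <= -a). { apply Hm2. intros y Hy. specialize (Hu _ Hy). simpl in Hu. lra. }
        lra.
      * specialize (Hu _ Hr0). simpl in Hu. auto.
  - exists m_infty. split; [intros; simpl; auto|].
    intros u Hu. destruct u as [a| |]; simpl; auto.
    + apply Hnb. exists a. intros r Hr. specialize (Hu _ Hr); simpl in Hu; auto.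
    + specialize (Hu _ Hr0); simpl in Hu; auto.
Qed.

Lemma lub_exists (E : Rbar -> Prop) : exists s, is_lub_Rbar E s.
Proof.
  destruct (classic (E p_infty)) as [Hm|Hm].
  { exists p_infty. split; [intros x _; destruct x; simpl; auto|]. intros u Hu. apply Hu; auto. }
  destruct (classic (exists r, E (Finite r))) as [[r0 Hr0]|Hno].
  2:{ exists m_infty. split.
      - intros x Hx. destruct x; simpl; auto. exfalso; apply Hno; eauto.
      - intros u _. destruct u; simpl; auto. }
  destruct (classic (exists b, forall r, E (Finite r) -> r <= b)) as [[b Hb]|Hnb].
  - set (G := fun y => E (Finite y)).
    assert (HG : bound G). { exists b. intros y Hy. apply Hb in Hy. lra. }
    assert (HG2 : exists y, G y). { exists r0. auto. }
    destruct (completeness G HG HG2) as [m [Hm1 Hm2]].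
    exists (Finite m). split.
    + intros x Hx. destruct x as [r| |]; simpl; auto; try tauto.
      all: apply Hm1 in Hx; lra.
    + intros u Hu. destruct u as [a| |]; simpl; auto.
      * apply Hm2. intros y Hy. specialize (Hu _ Hy). simpl in Hu. lra.
      * specialize (Hu _ Hr0). simpl in Hu. auto.
  - exists p_infty. split; [intros x _; destruct x; simpl; auto|].
    intros u Hu. destruct u as [a| |]; simpl; auto.
    + apply Hnb. exists a. intros r Hr. specialize (Hu _ Hr); simpl in Hu; auto.
    + specialize (Hu _ Hr0); simpl in Hu; auto.
Qed.

Lemma Rbar_inf_glb E : is_glb_Rbar E (Rbar_inf E).
Proof. unfold Rbar_inf. apply epsilon_spec. apply glb_exists. Qed.
Lemma Rbar_sup_lub E : is_lub_Rbar E (Rbar_sup E).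
Proof. unfold Rbar_sup. apply epsilon_spec. apply lub_exists. Qed.

Lemma inf_le (E : Rbar -> Prop) x : E x -> Rbar_le (Rbar_inf E) x.
Proof. intros. apply (proj1 (Rbar_inf_glb E)); auto. Qed.
Lemma inf_ge (E : Rbar -> Prop) u : (forall x, E x -> Rbar_le u x) -> Rbar_le u (Rbar_inf E).
Proof. intros. apply (proj2 (Rbar_inf_glb E)); auto. Qed.
Lemma sup_ge (E : Rbar -> Prop) x : E x -> Rbar_le x (Rbar_sup E).
Proof. intros. apply (proj1 (Rbar_sup_lub E)); auto. Qed.
Lemma sup_le (E : Rbar -> Prop) u : (forall x, E x -> Rbar_le x u) -> Rbar_le (Rbar_sup E) u.
Proof. intros. apply (proj2 (Rbar_sup_lub E)); auto. Qed.

Lemma inf_lt (E : Rbar -> Prop) a : ~ Rbar_le (Finite a) (Rbar_inf E) ->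
  exists x, E x /\ ~ Rbar_le (Finite a) x.
Proof. intros H. apply NNPP; intros H2. apply H, inf_ge. intros x Hx.
  apply NNPP; intros H3; apply H2; eauto. Qed.

Lemma dist_finite n (x : vec n) (S : vec n -> Prop) y0 : S y0 ->
  exists d, dist x S = Finite d /\ 0 <= d /\ (forall y, S y -> d <= vnorm (vsub x y)) /\
    (forall eps, 0 < eps -> exists y, S y /\ vnorm (vsub x y) < d + eps).
Proof. intros Hy0. unfold dist.
  set (E := fun t => exists y, S y /\ t = Finite (vnorm (vsub x y))).
  assert (H1 : Rbar_le (Finite 0) (Rbar_inf E)).
  { apply inf_ge. intros t [y [_ ->]]. simpl. apply vnorm_nonneg. }
  assert (H2 : Rbar_le (Rbar_inf E) (Finite (vnorm (vsub x y0)))).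
  { apply inf_le. exists y0; auto. }
  destruct (Rbar_inf E) as [d| |] eqn:Hd; simpl in H1, H2; try tauto.
  exists d. split; [auto|]. split; [auto|]. split.
  - intros y Hy. assert (Rbar_le (Rbar_inf E) (Finite (vnorm (vsub x y)))) by (apply inf_le; exists y; auto).
    rewrite Hd in H; simpl in H; auto.
  - intros eps Heps. apply NNPP; intros Hn.
    assert (Rbar_le (Finite (d + eps)) (Rbar_inf E)).
    { apply inf_ge. intros t [y [Hy ->]]. simpl. apply Rnot_lt_le. intros Hl; apply Hn; eauto. }
    rewrite Hd in H; simpl in H. lra.
Qed.

Definition rdist {n} (x : vec n) (S : vec n -> Prop) : R :=
  match dist x S with Finite r => r | _ => 0 end.

Lemma rdist_spec n (x : vec n) (S : vec n -> Prop) y0 : S y0 ->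
  dist x S = Finite (rdist x S) /\ 0 <= rdist x S /\ (forall y, S y -> rdist x S <= vnorm (vsub x y)) /\
    (forall eps, 0 < eps -> exists y, S y /\ vnorm (vsub x y) < rdist x S + eps).
Proof. intros Hy0. destruct (dist_finite n x S y0 Hy0) as [d [Hd H]].
  unfold rdist. rewrite Hd. auto. Qed.

Lemma rdist_le n (x : vec n) (S : vec n -> Prop) y : S y -> rdist x S <= vnorm (vsub x y).
Proof. intros Hy. apply (rdist_spec n x S y Hy); auto. Qed.

Lemma rdist_nonneg n (x : vec n) (S : vec n -> Prop) y : S y -> 0 <= rdist x S.
Proof. intros Hy. apply (rdist_spec n x S y Hy). Qed.

Lemma rdist_lip n (a b : vec n) (S : vec n -> Prop) y0 : S y0 ->
  rdist a S <= vnorm (vsub a b) + rdist b S.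
Proof. intros Hy0. apply Rnot_lt_le; intros Hlt.
  destruct (rdist_spec n b S y0 Hy0) as [_ [_ [_ Happ]]].
  destruct (Happ (rdist a S - vnorm (vsub a b) - rdist b S)) as [y [Hy Hb]]; [lra|].
  pose proof (rdist_le n a S y Hy). pose proof (vnorm_sub_triangle n a b y). lra. Qed.

Lemma rdist_lip_abs n (a b : vec n) (S : vec n -> Prop) y0 : S y0 ->
  Rabs (rdist a S - rdist b S) <= vnorm (vsub a b).
Proof. intros Hy0. pose proof (rdist_lip n a b S y0 Hy0). pose proof (rdist_lip n b a S y0 Hy0).
  rewrite vnorm_sub_comm in H0. apply Rabs_le; lra. Qed.

Lemma rdist_self n (x : vec n) (S : vec n -> Prop) : S x -> rdist x S = 0.
Proof. intros Hx. pose proof (rdist_le n x S x Hx). rewrite vnorm_sub_self in H.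
  pose proof (rdist_nonneg n x S x Hx). lra. Qed.

Definition incr (phi : nat -> nat) := forall k, (phi k < phi (S k))%nat.

Lemma incr_ge phi : incr phi -> forall k, (k <= phi k)%nat.
Proof. intros H k; induction k; [lia|]. specialize (H k); lia. Qed.

Lemma incr_mono phi : incr phi -> forall a b, (a <= b)%nat -> (phi a <= phi b)%nat.
Proof. intros H a b Hab. induction Hab; [lia|]. specialize (H m); lia. Qed.

Lemma incr_comp phi psi : incr phi -> incr psi -> incr (fun k => phi (psi k)).
Proof. intros H1 H2 k. unfold incr in *. pose proof (incr_mono phi H1 (S (psi k)) (psi (S k)) (H2 k)).
  specialize (H1 (psi k)). lia. Qed.

Lemma extract (P : nat -> nat -> Prop) : (forall k N, exists p, (N <= p)%nat /\ P k p) ->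
  exists phi, incr phi /\ forall k, P k (phi k).
Proof. intros H.
  set (c := fun k N => proj1_sig (constructive_indefinite_description _ (H k N))).
  assert (Hc : forall k N, (N <= c k N)%nat /\ P k (c k N)).
  { intros k N. unfold c. destruct (constructive_indefinite_description _ (H k N)); simpl; auto. }
  set (phi := fix f k := match k with 0%nat => c 0%nat 0%nat | S k' => c k (S (f k')) end).
  exists phi. split.
  - intros k. simpl. destruct (Hc (S k) (S (phi k))). lia.
  - intros k. destruct k; simpl; apply Hc.
Qed.

Lemma small_inv eps : 0 < eps -> exists N, forall k, (N <= k)%nat -> 1 / (INR k + 1) < eps.
Proof. intros He. destruct (INR_unbounded (1/eps)) as [N HN]. exists N. intros k Hk.
  apply le_INR in Hk. pose proof (pos_INR N).
  assert (H1 : 1/eps < INR k + 1) by lra.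
  apply (Rmult_lt_compat_l eps) in H1; auto.
  assert (eps * (1/eps) = 1) by (field; lra).
  apply (Rmult_lt_reg_r (INR k + 1)); [lra|]. unfold Rdiv. rewrite Rmult_assoc, Rinv_l by lra. lra. Qed.

Lemma inv_pos k : 0 < 1 / (INR k + 1).
Proof. pose proof (pos_INR k). apply Rdiv_lt_0_compat; lra. Qed.

Lemma real_bw (u : nat -> R) M : (forall k, Rabs (u k) <= M) ->
  exists phi a, incr phi /\ forall eps, 0 < eps -> exists N, forall k, (N <= k)%nat -> Rabs (u (phi k) - a) < eps.
Proof. intros HM.
  destruct (Bolzano_Weierstrass u (fun c => -M <= c <= M) (compact_P3 (-M) M)) as [a Ha].
  { intros k. specialize (HM k). pose proof (Rle_abs (u k)). pose proof (Rle_abs (- u k)). rewrite Rabs_Ropp in H0. lra. }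
  destruct (extract (fun k p => Rabs (u p - a) < 1 / (INR k + 1))) as [phi [Hphi Hp]].
  { intros k N. destruct (Ha (fun y => Rabs (y - a) < 1 / (INR k + 1)) N) as [p [Hp1 Hp2]].
    - exists (mkposreal _ (inv_pos k)). intros y Hy. unfold disc in Hy. simpl in Hy. auto.
    - exists p; auto. }
  exists phi, a. split; auto. intros eps He. destruct (small_inv eps He) as [N HN].
  exists N. intros k Hk. specialize (Hp k). specialize (HN k Hk). lra. Qed.

Lemma seq_conv_sub n (u : nat -> vec n) x phi : incr phi -> seq_conv u x -> seq_conv (fun k => u (phi k)) x.
Proof. intros Hp Hu eps He. destruct (Hu eps He) as [N HN]. exists N. intros k Hk.
  apply HN. pose proof (incr_ge phi Hp k). lia. Qed.

Lemma seq_conv_unique n (u : nat -> vec n) x y : seq_conv u x -> seq_conv u y -> x = y.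
Proof. intros Hx Hy. apply NNPP; intros Hne.
  assert (Hpos : 0 < vnorm (vsub x y)).
  { pose proof (vnorm_nonneg n (vsub x y)). destruct (Req_dec (vnorm (vsub x y)) 0) as [E|E]; [|lra].
    exfalso; apply Hne. apply vnorm_eq0 in E. apply functional_extensionality; intro i.
    apply (f_equal (fun f => f i)) in E. unfold vsub in E. cbv beta in E. lra. }
  assert (Hp2 : 0 < vnorm (vsub x y) / 2) by lra.
  destruct (Hx _ Hp2) as [N1 H1]. destruct (Hy _ Hp2) as [N2 H2].
  specialize (H1 (N1 + N2)%nat ltac:(lia)). specialize (H2 (N1 + N2)%nat ltac:(lia)).
  pose proof (vnorm_sub_triangle n x (u (N1+N2)%nat) y). rewrite (vnorm_sub_comm n x (u (N1+N2)%nat)) in H. lra.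
Qed.

Definition vcons {n} (a : R) (b : vec n) : vec (S n) := fun i => Fin.caseS' i (fun _ => R) a b.
Definition vtail {n} (x : vec (S n)) : vec n := fun i => x (Fin.FS i).

Lemma vnorm_cons_le n (x : vec (S n)) : vnorm x <= Rabs (x Fin.F1) + vnorm (vtail x).
Proof. unfold vnorm, inner, vtail. simpl.
    set (T := sumF n (fun i => x (Fin.FS i) * x (Fin.FS i))) in *.
    assert (0 <= T) by (apply sumF_nonneg; intros; nra).
    pose proof (sqrt_pos T). pose proof (Rabs_pos (x Fin.F1)).
    rewrite <- (sqrt_square (Rabs (x Fin.F1) + sqrt T)) by lra.
    apply sqrt_le_1_alt.
    assert (Rabs (x Fin.F1) * Rabs (x Fin.F1) = x Fin.F1 * x Fin.F1) by (rewrite <- Rabs_mult; apply Rabs_right; nra).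
    pose proof (sqrt_sqrt T H). nra. Qed.

Lemma vnorm_tail_le n (x : vec (S n)) : vnorm (vtail x) <= vnorm x.
Proof. unfold vnorm, inner, vtail. simpl. apply sqrt_le_1_alt. nra. Qed.

Lemma vnorm_vec0 (x : vec 0) : vnorm x = 0.
Proof. unfold vnorm, inner; simpl. apply sqrt_0. Qed.

Lemma vec_bw n (u : nat -> vec n) M : (forall k, vnorm (u k) <= M) ->
  exists phi x, incr phi /\ seq_conv (fun k => u (phi k)) x.
Proof. revert u M; induction n; intros u M HM.
  - exists (fun k => k), (fun _ => 0). split; [intro; lia|].
    intros eps He; exists 0%nat; intros. rewrite vnorm_vec0; lra.
  - destruct (real_bw (fun k => u k Fin.F1) M) as [phi1 [a [Hp1 Ha]]].
    { intros k. eapply Rle_trans; [apply vnorm_coord|]. apply HM. }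
    destruct (IHn (fun k => vtail (u (phi1 k))) M) as [phi2 [b [Hp2 Hb]]].
    { intros k. eapply Rle_trans; [apply vnorm_tail_le|]. apply HM. }
    exists (fun k => phi1 (phi2 k)), (vcons a b). split; [apply incr_comp; auto|].
    intros eps He.
    destruct (Ha (eps/2) ltac:(lra)) as [N1 HN1]. destruct (Hb (eps/2) ltac:(lra)) as [N2 HN2].
    exists (N1 + N2)%nat. intros k Hk.
    eapply Rle_lt_trans; [apply vnorm_cons_le|].
    assert (vtail (vsub (u (phi1 (phi2 k))) (vcons a b)) = vsub (vtail (u (phi1 (phi2 k)))) b) by reflexivity.
    rewrite H. specialize (HN2 k ltac:(lia)). simpl in HN2.
    pose proof (incr_ge phi2 Hp2 k). specialize (HN1 (phi2 k) ltac:(lia)).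
    unfold vsub at 1. simpl. lra.
Qed.

Lemma closed_inter_ball n (T : vec n -> Prop) c r : is_closed T ->
  is_closed (fun y => T y /\ vnorm (vsub y c) <= r).
Proof. intros HT u x Hu Hc. split.
  - apply (HT u x); auto. intros k; apply Hu.
  - apply Rnot_lt_le; intros Hlt.
    destruct (Hc (vnorm (vsub x c) - r) ltac:(lra)) as [N HN].
    specialize (HN N (le_n N)). destruct (Hu N) as [_ H2].
    pose proof (vnorm_sub_triangle n x (u N) c). rewrite (vnorm_sub_comm n x (u N)) in H. lra.
Qed.

Lemma vnorm_bound_center n (y c : vec n) R0 : vnorm (vsub y c) <= R0 -> vnorm y <= vnorm c + R0.
Proof. intros H. replace y with (vadd (vsub y c) c) by vext.
  pose proof (vnorm_triangle n (vsub y c) c). lra. Qed.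

Lemma min_exists n (T : vec n -> Prop) (F : vec n -> R) c R0 b y0 :
  is_closed T -> T y0 -> (forall y, T y -> vnorm (vsub y c) <= R0) -> (forall y, T y -> b <= F y) ->
  (forall y, T y -> forall eps, 0 < eps -> exists delta, 0 < delta /\
     forall y', T y' -> vnorm (vsub y' y) < delta -> F y <= F y' + eps) ->
  exists y, T y /\ forall y', T y' -> F y <= F y'.
Proof. intros HT Hy0 Hbd Hb Hlsc.
  set (G := fun r => exists y, T y /\ r = - F y).
  assert (HG : bound G). { exists (-b). intros r [y [Hy ->]]. specialize (Hb y Hy). lra. }
  assert (HG2 : exists r, G r) by (exists (- F y0); exists y0; auto).
  destruct (completeness G HG HG2) as [m [Hm1 Hm2]].
  assert (Hlow : forall y, T y -> -m <= F y).
  { intros y Hy. assert (G (- F y)) by (exists y; auto). apply Hm1 in H. lra. }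
  assert (Hk : forall k, exists y, T y /\ F y < -m + 1 / (INR k + 1)).
  { intros k. apply NNPP; intros Hn.
    assert (m <= m - 1/(INR k + 1)).
    { apply Hm2. intros r [y [Hy ->]]. apply Rnot_lt_le; intros Hl. apply Hn. exists y; split; auto; lra. }
    pose proof (inv_pos k). lra. }
  set (ys := fun k => proj1_sig (constructive_indefinite_description _ (Hk k))).
  assert (Hys : forall k, T (ys k) /\ F (ys k) < -m + 1 / (INR k + 1)).
  { intros k. unfold ys. destruct (constructive_indefinite_description _ (Hk k)); simpl; auto. }
  destruct (vec_bw n ys (vnorm c + R0)) as [phi [y [Hphi Hconv]]].
  { intros k. apply vnorm_bound_center, Hbd, Hys. }
  assert (Ty : T y). { apply (HT (fun k => ys (phi k)) y); auto. intros k; apply Hys. }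
  exists y. split; auto. intros y' Hy'.
  assert (F y <= -m).
  { apply Rnot_lt_le; intros Hl. set (eps := (F y + m)/3).
    destruct (Hlsc y Ty eps ltac:(unfold eps; lra)) as [delta [Hd Hdel]].
    destruct (Hconv delta Hd) as [N1 HN1]. destruct (small_inv eps ltac:(unfold eps; lra)) as [N2 HN2].
    specialize (HN1 (N1 + N2)%nat ltac:(lia)).
    pose proof (incr_ge phi Hphi (N1 + N2)%nat).
    specialize (HN2 (phi (N1 + N2)%nat) ltac:(lia)).
    specialize (Hdel _ (proj1 (Hys _)) HN1).
    pose proof (proj2 (Hys (phi (N1 + N2)%nat))). unfold eps in *. lra. }
  pose proof (Hlow y' Hy'). lra.
Qed.

Lemma proj_exists n (T : vec n -> Prop) u y0 : is_closed T -> T y0 ->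
  exists p, T p /\ forall y, T y -> vnorm (vsub u p) <= vnorm (vsub u y).
Proof. intros HT Hy0.
  destruct (min_exists n (fun y => T y /\ vnorm (vsub y u) <= vnorm (vsub y0 u)) (fun y => vnorm (vsub u y))
     u (vnorm (vsub y0 u)) 0 y0) as [p [[Tp Hpb] Hp]].
  - apply closed_inter_ball; auto.
  - split; auto; lra.
  - intros y [_ H]; auto.
  - intros; apply vnorm_nonneg.
  - intros y _ eps He. exists eps. split; auto. intros y' _ Hy'.
    pose proof (vnorm_sub_triangle n u y' y). lra.
  - exists p. split; auto. intros y Ty.
    destruct (Rle_dec (vnorm (vsub y u)) (vnorm (vsub y0 u))).
    + apply Hp; auto.
    + pose proof (Hp y0 (conj Hy0 (Rle_refl _))). rewrite !(vnorm_sub_comm n u) in *. lra.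
Qed.

Lemma rdist_proj n (T : vec n -> Prop) u p : T p -> (forall y, T y -> vnorm (vsub u p) <= vnorm (vsub u y)) ->
  rdist u T = vnorm (vsub u p).
Proof. intros Tp Hp. destruct (rdist_spec n u T p Tp) as [_ [_ [Hle Happ]]].
  apply Rle_antisym; auto. apply Rnot_lt_le; intros Hl.
  destruct (Happ (vnorm (vsub u p) - rdist u T) ltac:(lra)) as [y [Ty Hy]].
  specialize (Hp y Ty). lra. Qed.

Lemma mapply_scal l n (A : mat l n) t h : mapply A (vscal t h) = vscal t (mapply A h).
Proof. apply functional_extensionality; intro i. unfold mapply, vscal. rewrite <- sumF_scal.
  apply sumF_ext; intros; ring. Qed.
Lemma mapply_sub l n (A : mat l n) x y : mapply A (vsub x y) = vsub (mapply A x) (mapply A y).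
Proof. apply functional_extensionality; intro i. unfold mapply, vsub. rewrite <- sumF_minus.
  apply sumF_ext; intros; ring. Qed.
Lemma mtapply_scal l n (A : mat l n) t h : mtapply A (vscal t h) = vscal t (mtapply A h).
Proof. apply functional_extensionality; intro i. unfold mtapply, vscal. rewrite <- sumF_scal.
  apply sumF_ext; intros; ring. Qed.
Lemma mtapply_sub l n (A : mat l n) x y : mtapply A (vsub x y) = vsub (mtapply A x) (mtapply A y).
Proof. apply functional_extensionality; intro i. unfold mtapply, vsub. rewrite <- sumF_minus.
  apply sumF_ext; intros; ring. Qed.
Definition msub {l n} (A B : mat l n) : mat l n := fun i j => A i j - B i j.
Lemma mapply_msub l n (A B : mat l n) x : mapply (msub A B) x = vsub (mapply A x) (mapply B x).
Proof. apply functional_extensionality; intro i. unfold mapply, vsub, msub. rewrite <- sumF_minus.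
  apply sumF_ext; intros; ring. Qed.
Lemma mtapply_msub l n (A B : mat l n) x : mtapply (msub A B) x = vsub (mtapply A x) (mtapply B x).
Proof. apply functional_extensionality; intro i. unfold mtapply, vsub, msub. rewrite <- sumF_minus.
  apply sumF_ext; intros; ring. Qed.

Lemma mnorm_small l n (A : mat l n) e : (forall i j, Rabs (A i j) <= e) -> mnorm A <= INR l * INR n * e.
Proof. intros H. unfold mnorm. rewrite Rmult_assoc, <- sumF_const. apply sumF_le; intros i.
  rewrite <- sumF_const. apply sumF_le; auto. Qed.

Lemma mnorm_close l n (A B : mat l n) e : (forall i j, Rabs (A i j - B i j) <= e) -> mnorm A <= mnorm B + INR l * INR n * e.
Proof. intros H. unfold mnorm. rewrite Rmult_assoc, <- sumF_const, <- sumF_plus. apply sumF_le; intros i.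
  rewrite <- sumF_const, <- sumF_plus. apply sumF_le; intros j. specialize (H i j).
  pose proof (Rabs_triang (A i j - B i j) (B i j)). replace (A i j - B i j + B i j) with (A i j) in H0 by ring. lra. Qed.

Lemma diff_lip n m (W : vec n -> Prop) (g : vec n -> vec m) Dg x : C1_on W g Dg -> W x ->
  exists delta, 0 < delta /\ forall y, vnorm (vsub y x) < delta ->
    vnorm (vsub (g y) (g x)) <= (mnorm (Dg x) + 1) * vnorm (vsub y x).
Proof. intros [Hd _] Wx. destruct (Hd x Wx 1 ltac:(lra)) as [delta [Hdel H]]. exists delta; split; auto.
  intros y Hy. specialize (H y Hy).
  replace (vsub (g y) (g x)) with (vadd (vsub (vsub (g y) (g x)) (mapply (Dg x) (vsub y x))) (mapply (Dg x) (vsub y x))) by vext.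
  eapply Rle_trans; [apply vnorm_triangle|]. pose proof (mapply_bound _ _ (Dg x) (vsub y x)). lra. Qed.

Lemma diff_cont n m (W : vec n -> Prop) (g : vec n -> vec m) Dg x : C1_on W g Dg -> W x ->
  forall eps, 0 < eps -> exists delta, 0 < delta /\ forall y, vnorm (vsub y x) < delta ->
    vnorm (vsub (g y) (g x)) < eps.
Proof. intros HC Wx eps He. destruct (diff_lip n m W g Dg x HC Wx) as [d [Hd H]].
  pose proof (mnorm_nonneg _ _ (Dg x)).
  exists (Rmin d (eps / (mnorm (Dg x) + 1))). split.
  { apply Rmin_glb_lt; auto. apply Rdiv_lt_0_compat; lra. }
  intros y Hy. specialize (H y (Rlt_le_trans _ _ _ Hy (Rmin_l _ _))).
  pose proof (Rmin_r d (eps / (mnorm (Dg x) + 1))).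
  assert (vnorm (vsub y x) < eps / (mnorm (Dg x) + 1)) by lra.
  apply (Rmult_lt_compat_l (mnorm (Dg x) + 1)) in H2; [|lra].
  replace ((mnorm (Dg x) + 1) * (eps / (mnorm (Dg x) + 1))) with eps in H2 by (field; lra). lra. Qed.

Lemma deriv_coord n m (W : vec n -> Prop) (g : vec n -> vec m) Dg y h t0 i :
  C1_on W g Dg -> W (vadd y (vscal t0 h)) ->
  derivable_pt_lim (fun t => g (vadd y (vscal t h)) i) t0 (mapply (Dg (vadd y (vscal t0 h))) h i).
Proof. intros [Hd _] Wp eps He. set (p := vadd y (vscal t0 h)) in *.
  pose proof (vnorm_nonneg n h).
  destruct (Hd p Wp (eps / (vnorm h + 1)) ltac:(apply Rdiv_lt_0_compat; lra)) as [d [Hdp Hdl]].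
  assert (Hpos : 0 < d / (vnorm h + 1)) by (apply Rdiv_lt_0_compat; lra).
  exists (mkposreal _ Hpos). simpl. intros t Ht Hlt.
  assert (E : vadd y (vscal (t0 + t) h) = vadd p (vscal t h)) by (unfold p; vext).
  rewrite E. assert (E2 : vsub (vadd p (vscal t h)) p = vscal t h) by vext.
  assert (Hn : vnorm (vsub (vadd p (vscal t h)) p) < d).
  { rewrite E2, vnorm_scal. apply (Rmult_lt_compat_r (vnorm h + 1)) in Hlt; [|lra].
    replace (d / (vnorm h + 1) * (vnorm h + 1)) with d in Hlt by (field; lra). nra. }
  specialize (Hdl _ Hn). rewrite E2, mapply_scal, vnorm_scal in Hdl.
  pose proof (vnorm_coord m (vsub (vsub (g (vadd p (vscal t h))) (g p)) (vscal t (mapply (Dg p) h))) i) as Hc.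
  unfold vsub at 1 in Hc. unfold vsub at 1 in Hc. unfold vscal at 1 in Hc. cbv beta in Hc.
  assert (Hat : 0 < Rabs t) by (apply Rabs_pos_lt; auto).
  replace ((g (vadd p (vscal t h)) i - g p i) / t - mapply (Dg p) h i)
    with ((g (vadd p (vscal t h)) i - g p i - t * mapply (Dg p) h i) / t) by (field; auto).
  unfold Rdiv. rewrite Rabs_mult, Rabs_inv.
  apply (Rmult_lt_reg_r (Rabs t)); auto. rewrite Rmult_assoc, Rinv_l by lra.
  eapply Rle_lt_trans; [rewrite Rmult_1_r; apply Hc|]. eapply Rle_lt_trans; [apply Hdl|].
  assert (eps / (vnorm h + 1) * vnorm h < eps).
  { apply (Rmult_lt_reg_r (vnorm h + 1)); [lra|].
    replace (eps / (vnorm h + 1) * vnorm h * (vnorm h + 1)) with (eps * vnorm h) by (field; lra). nra. }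
  nra. Qed.

Lemma sumF_deriv n (F : R -> Fin.t n -> R) F' t0 :
  (forall i, derivable_pt_lim (fun t => F t i) t0 (F' i)) ->
  derivable_pt_lim (fun t => sumF n (F t)) t0 (sumF n F').
Proof. revert F F'; induction n; intros F F' H; simpl.
  - apply derivable_pt_lim_const.
  - apply (derivable_pt_lim_plus (fun t => F t Fin.F1) (fun t => sumF n (fun i => F t (Fin.FS i)))).
    + apply H.
    + apply (IHn (fun t i => F t (Fin.FS i))). intros; apply H. Qed.

Lemma deriv_eq f x l l' : derivable_pt_lim f x l -> l = l' -> derivable_pt_lim f x l'.
Proof. intros; subst; auto. Qed.

Lemma deriv_normsq m (u : R -> vec m) (u' : vec m) t0 :
  (forall i, derivable_pt_lim (fun t => u t i) t0 (u' i)) ->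
  derivable_pt_lim (fun t => inner (u t) (u t)) t0 (2 * inner (u t0) u').
Proof. intros H. unfold inner.
  apply deriv_eq with (sumF m (fun i => u' i * u t0 i + u t0 i * u' i)).
  - apply (sumF_deriv m (fun t i => u t i * u t i)). intros i.
    apply (derivable_pt_lim_mult (fun t => u t i) (fun t => u t i)); apply H.
  - rewrite <- sumF_scal. apply sumF_ext; intros; ring. Qed.

Lemma ball_convex n (z c zb : vec n) rho t : vnorm (vsub z zb) < rho -> vnorm (vsub c zb) < rho -> 0 <= t <= 1 ->
  vnorm (vsub (vadd z (vscal t (vsub c z))) zb) < rho.
Proof. intros Hz Hc Ht.
  replace (vsub (vadd z (vscal t (vsub c z))) zb) with (vadd (vscal (1-t) (vsub z zb)) (vscal t (vsub c zb))) by vext.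
  eapply Rle_lt_trans; [apply vnorm_triangle|]. rewrite !vnorm_scal, !Rabs_right by lra.
  destruct (Req_dec t 0). subst; lra. nra. Qed.

Lemma Dg_cont n m (W : vec n -> Prop) (g : vec n -> vec m) Dg zb : C1_on W g Dg -> W zb ->
  forall e, 0 < e -> exists delta, 0 < delta /\ forall y, W y -> vnorm (vsub y zb) < delta ->
     forall i j, Rabs (Dg y i j - Dg zb i j) < e.
Proof. intros [_ Hc] Wz. apply Hc; auto. Qed.

Lemma unif_diff n m (W : vec n -> Prop) (g : vec n -> vec m) Dg zb rho0 :
  C1_on W g Dg -> W zb -> 0 < rho0 -> (forall y, vnorm (vsub y zb) < rho0 -> W y) ->
  forall theta, 0 < theta -> exists rho, 0 < rho /\ rho <= rho0 /\ forall z c,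
    vnorm (vsub z zb) < rho -> vnorm (vsub c zb) < rho ->
    vnorm (vsub (vsub (g c) (g z)) (mapply (Dg z) (vsub c z))) <= theta * vnorm (vsub c z).
Proof. intros HC Wz Hr0 HW theta Hth.
  set (K := INR m * INR n). assert (HK : 0 <= K) by (unfold K; pose proof (pos_INR m); pose proof (pos_INR n); nra).
  set (e := theta / (2 * (K + 1))). assert (He : 0 < e) by (unfold e; apply Rdiv_lt_0_compat; lra).
  destruct (Dg_cont n m W g Dg zb HC Wz e He) as [d [Hd Hdc]].
  exists (Rmin d rho0). split; [apply Rmin_glb_lt; auto|]. split; [apply Rmin_r|].
  intros z c Hz Hc. pose proof (Rmin_l d rho0); pose proof (Rmin_r d rho0).
  set (h := vsub c z).
  assert (Hcoord : forall i, Rabs (vsub (vsub (g c) (g z)) (mapply (Dg z) h) i) <= INR n * (2 * e) * vnorm h).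
  { intros i.
    assert (Hder : forall t, 0 <= t <= 1 -> derivable_pt_lim (fun t => g (vadd z (vscal t h)) i) t (mapply (Dg (vadd z (vscal t h))) h i)).
    { intros t Ht. apply (deriv_coord n m W); auto. apply HW. unfold h. pose proof (ball_convex n z c zb (Rmin d rho0) t Hz Hc Ht). lra. }
    destruct (MVT_cor2 (fun t => g (vadd z (vscal t h)) i) (fun t => mapply (Dg (vadd z (vscal t h))) h i) 0 1 ltac:(lra) Hder) as [xi [Hxi Hxir]].
    assert (E1 : vadd z (vscal 1 h) = c) by (unfold h; vext). assert (E0 : vadd z (vscal 0 h) = z) by (unfold h; vext).
    rewrite E1, E0 in Hxi. unfold vsub at 1. unfold vsub at 1. cbv beta. rewrite Hxi. replace (1 - 0) with 1 by ring. rewrite Rmult_1_r.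
    set (p := vadd z (vscal xi h)).
    assert (Hp : vnorm (vsub p zb) < Rmin d rho0) by (apply ball_convex; auto; lra).
    unfold mapply. rewrite <- sumF_minus. eapply Rle_trans; [apply sumF_abs|].
    rewrite Rmult_assoc, <- sumF_const. apply sumF_le; intros j.
    replace (Dg p i j * h j - Dg z i j * h j) with ((Dg p i j - Dg z i j) * h j) by ring.
    rewrite Rabs_mult. pose proof (vnorm_coord n h j).
    assert (Rabs (Dg p i j - Dg z i j) <= 2 * e).
    { pose proof (Hdc p (HW p ltac:(lra)) ltac:(lra) i j). pose proof (Hdc z (HW z ltac:(lra)) ltac:(lra) i j).
      replace (Dg p i j - Dg z i j) with ((Dg p i j - Dg zb i j) - (Dg z i j - Dg zb i j)) by ring.
      eapply Rle_trans; [apply Rabs_triang|]. rewrite Rabs_Ropp. lra. }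
    pose proof (Rabs_pos (Dg p i j - Dg z i j)). pose proof (Rabs_pos (h j)). nra. }
  eapply Rle_trans; [apply vnorm_le_sumabs|].
  eapply Rle_trans. { apply sumF_le. intros i. apply Hcoord. }
  rewrite sumF_const. fold h. pose proof (vnorm_nonneg n h).
  assert (INR m * (INR n * (2 * e)) <= theta).
  { unfold e. replace (INR m * (INR n * (2 * (theta / (2 * (K + 1)))))) with (theta * (K / (K+1))) by (unfold K; unfold K in HK; field; lra).
    assert (K / (K+1) <= 1). { apply (Rmult_le_reg_r (K+1)); [lra|]. field_simplify; lra. }
    nra. }
  nra. Qed.

Lemma le_eps a b c T : 0 < T -> 0 <= c -> (forall tau, 0 < tau < T -> a <= b + c * tau) -> a <= b.
Proof. intros HT Hc H. apply Rnot_lt_le; intros Hl.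
  set (tau := Rmin (T/2) ((a-b)/(2*(c+1)))).
  assert (0 < tau) by (apply Rmin_glb_lt; [lra|apply Rdiv_lt_0_compat; lra]).
  assert (tau <= T/2) by apply Rmin_l. assert (tau <= (a-b)/(2*(c+1))) by apply Rmin_r.
  specialize (H tau ltac:(lra)).
  assert (c * tau <= (a-b)/2).
  { apply Rle_trans with ((c+1) * ((a-b)/(2*(c+1)))); [nra|]. right; field; lra. }
  lra. Qed.

Lemma sqrt_ge a e : 0 <= a -> a <= sqrt (a*a + e*e).
Proof. intros Ha. rewrite <- (sqrt_square a) at 1 by auto. apply sqrt_le_1_alt. nra. Qed.

Lemma sqrt_lip a b e : 0 <= a -> 0 <= b -> Rabs (sqrt (a*a + e*e) - sqrt (b*b + e*e)) <= Rabs (a - b).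
Proof. intros Ha Hb.
  assert (H : forall a b, 0 <= a -> 0 <= b -> sqrt (a*a + e*e) - sqrt (b*b + e*e) <= Rabs (a - b)).
  { clear a b Ha Hb. intros a b Ha Hb.
    set (sa := sqrt (a*a+e*e)). set (sb := sqrt (b*b+e*e)).
    pose proof (sqrt_ge a e Ha). pose proof (sqrt_ge b e Hb). fold sa sb in H, H0.
    assert (sa*sa = a*a+e*e) by (apply sqrt_sqrt; nra). assert (sb*sb = b*b+e*e) by (apply sqrt_sqrt; nra).
    destruct (Rle_dec sa sb); [pose proof (Rabs_pos (a-b)); lra|].
    assert (Hs : 0 < sa + sb) by (pose proof (sqrt_pos (b*b+e*e)); fold sb in H3; lra).
    assert ((sa - sb) * (sa + sb) <= Rabs (a-b) * (sa + sb)).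
    { replace ((sa - sb) * (sa + sb)) with ((a - b) * (a + b)) by nra.
      pose proof (Rle_abs (a-b)). pose proof (Rle_abs (-(a-b))). rewrite Rabs_Ropp in H4.
      destruct (Rle_dec 0 (a-b)); nra. }
    apply (Rmult_le_reg_r (sa+sb)); auto. }
  apply Rabs_le. split; [|apply H; auto].
  pose proof (H b a Hb Ha). rewrite Rabs_minus_sym in H0. lra. Qed.

Lemma sqrt_eta e : 0 <= e -> sqrt (0*0 + e*e) = e.
Proof. intros. replace (0*0+e*e) with (e*e) by ring. apply sqrt_square; auto. Qed.

Lemma inner_zero_r n (v : vec n) : inner v (fun _ => 0) = 0.
Proof. unfold inner. transitivity (sumF n (fun _ => 0)). apply sumF_ext; intros; ring. apply sumF_zero. Qed.

Lemma inner_sub_sq n (a b : vec n) : inner (vsub a b) (vsub a b) = inner a a - 2 * inner a b + inner b b.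
Proof. rewrite inner_sub_l, !inner_sub_r, (inner_comm _ b a). ring. Qed.

Lemma proj_ineq n (u z c : vec n) : vnorm (vsub u z) <= vnorm (vsub u c) ->
  inner (vsub u z) (vsub c z) <= / 2 * (vnorm (vsub c z) * vnorm (vsub c z)).
Proof. intros H. pose proof (vnorm_nonneg n (vsub u z)).
  assert (vnorm (vsub u z) * vnorm (vsub u z) <= vnorm (vsub u c) * vnorm (vsub u c)) by nra.
  rewrite !vnorm_sq in *. replace (vsub u c) with (vsub (vsub u z) (vsub c z)) in H1 by vext.
  rewrite (inner_sub_sq n (vsub u z) (vsub c z)) in H1. lra. Qed.

Lemma deriv_affine_coord n (y h x : vec n) i t0 :
  derivable_pt_lim (fun t => vsub (vadd y (vscal t h)) x i) t0 (h i).
Proof. intros eps He. exists (mkposreal 1 Rlt_0_1). intros t Ht _. unfold vsub, vadd, vscal.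
  replace ((y i + (t0 + t) * h i - x i - (y i + t0 * h i - x i)) / t - h i) with 0 by (field; auto).
  rewrite Rabs_R0; auto. Qed.

Lemma deriv_minus_const_coord (f : R -> R) c t0 l : derivable_pt_lim f t0 l ->
  derivable_pt_lim (fun t => f t - c) t0 l.
Proof. intros H eps He. destruct (H eps He) as [d Hd]. exists d. intros t Ht Hlt.
  replace ((f (t0 + t) - c - (f t0 - c)) / t) with ((f (t0 + t) - f t0) / t) by (field; auto). auto. Qed.

Lemma deriv_plus_const (f : R -> R) c t0 l : derivable_pt_lim f t0 l ->
  derivable_pt_lim (fun t => f t + c) t0 l.
Proof. intros H eps He. destruct (H eps He) as [d Hd]. exists d. intros t Ht Hlt.
  replace ((f (t0 + t) + c - (f t0 + c)) / t) with ((f (t0 + t) - f t0) / t) by (field; auto). auto. Qed.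

Lemma A_reg n m (W : vec n -> Prop) (g : vec n -> vec m) Dg (K : vec m -> Prop) kappa x v rho_s eps :
  C1_on W g Dg -> is_closed K -> 0 <= kappa -> 0 < rho_s -> 0 < eps ->
  W x -> K (g x) ->
  (forall y, vnorm (vsub y x) < rho_s -> W y /\
     Rbar_le (dist y (fun y => W y /\ K (g y))) (Rbar_scal kappa (dist (g y) K))) ->
  reg_normal (fun y => W y /\ K (g y)) x v ->
  exists y z mu, W y /\ vnorm (vsub y x) < eps /\ K z /\ vnorm (vsub z (g x)) < eps /\
    reg_normal K z mu /\ vnorm mu <= (vnorm v + eps) * kappa /\
    vnorm (vsub (mtapply (Dg y) mu) v) <= eps.
Proof.
  intros HC HK Hk Hrs He Wx Kx Hsub [_ Hv].
  set (S := fun y => W y /\ K (g y)). assert (Sx : S x) by (split; auto).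
  set (e1 := eps/2).
  destruct (Hv e1 ltac:(unfold e1; lra)) as [rho [Hrho Hreg]].
  set (phi := fun y => - inner v (vsub y x) + e1 * vnorm (vsub y x)).
  set (L := vnorm v + e1). assert (HL : 0 < L) by (unfold L, e1; pose proof (vnorm_nonneg n v); lra).
  assert (Hlip : forall y s, phi s - L * vnorm (vsub y s) <= phi y).
  { intros y s. unfold phi, L.
    assert (inner v (vsub y x) - inner v (vsub s x) = inner v (vsub y s)).
    { rewrite <- inner_sub_r. f_equal. vext. }
    pose proof (inner_le n v (vsub y s)).
    pose proof (vnorm_sub_triangle n s y x). rewrite (vnorm_sub_comm n s y) in H1.
    pose proof (vnorm_nonneg n (vsub y s)).
    assert (e1 * vnorm (vsub s x) <= e1 * (vnorm (vsub y s) + vnorm (vsub y x))) by (apply Rmult_le_compat_l; unfold e1; lra).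
    lra. }
  assert (Hphi0 : forall s, S s -> vnorm (vsub s x) < rho -> 0 <= phi s).
  { intros s Ss Hs. specialize (Hreg s Ss Hs). unfold phi. lra. }
  set (r := Rmin (rho/3) rho_s). assert (Hr : 0 < r) by (apply Rmin_glb_lt; lra).
  assert (Hra : r <= rho/3) by apply Rmin_l. assert (Hrb : r <= rho_s) by apply Rmin_r.
  assert (Hpen : forall y, vnorm (vsub y x) < r -> - (L * kappa * rdist (g y) K) <= phi y).
  { intros y Hy. assert (Hy1 : vnorm (vsub y x) < rho/3) by lra.
    assert (Hy2 : vnorm (vsub y x) < rho_s) by lra.
    destruct (Hsub y Hy2) as [Wy Hb].
    change (Rbar_le (dist y S) (Rbar_scal kappa (dist (g y) K))) in Hb.
    destruct (rdist_spec n y S x Sx) as [HdS [HdS0 [HdSle HdSapp]]].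
    destruct (rdist_spec m (g y) K (g x) Kx) as [HdK [HdK0 _]].
    rewrite HdS, HdK in Hb. simpl in Hb.
    assert (- (L * rdist y S) <= phi y).
    { apply Ropp_le_cancel. rewrite Ropp_involutive.
      apply (le_eps _ _ L (rho/3)); [lra|lra|]. intros tau Htau.
      destruct (HdSapp tau ltac:(lra)) as [s [Ss Hs]].
      pose proof (HdSle x Sx).
      assert (vnorm (vsub s x) < rho).
      { pose proof (vnorm_sub_triangle n s y x). rewrite (vnorm_sub_comm n s y) in H0. lra. }
      specialize (Hphi0 s Ss H0). specialize (Hlip y s).
      assert (L * vnorm (vsub y s) <= L * (rdist y S + tau)) by (apply Rmult_le_compat_l; lra). lra. }
    nra. }
  destruct (diff_cont n m W g Dg x HC Wx (eps/2) ltac:(lra)) as [dg [Hdg Hgc]].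
  set (r1 := Rmin (Rmin (r/2) (dg/2)) (eps/2)).
  assert (Hr1 : 0 < r1) by (unfold r1; repeat apply Rmin_glb_lt; lra).
  assert (Hr1a : r1 <= r/2) by (apply Rle_trans with (Rmin (r/2) (dg/2)); [apply Rmin_l|apply Rmin_l]).
  assert (Hr1b : r1 <= dg/2) by (apply Rle_trans with (Rmin (r/2) (dg/2)); [apply Rmin_l|apply Rmin_r]).
  assert (Hr1c : r1 <= eps/2) by apply Rmin_r.
  set (M := Rmin (r1*r1) (eps*eps)). assert (HM : 0 < M) by (apply Rmin_glb_lt; nra).
  assert (HMa : M <= r1*r1) by apply Rmin_l. assert (HMb : M <= eps*eps) by apply Rmin_r.
  set (LK := L * kappa). assert (HLK : 0 <= LK) by (unfold LK; nra).
  set (eta := M / (64 * (LK + 1))). assert (Heta : 0 < eta) by (unfold eta; apply Rdiv_lt_0_compat; lra).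
  assert (HLKeta : LK * eta <= M / 64).
  { unfold eta. apply Rle_trans with ((LK+1) * (M / (64 * (LK+1)))).
    - apply Rmult_le_compat_r; [left; apply Rdiv_lt_0_compat; lra|lra].
    - right; field; lra. }
  assert (Hphix : phi x = 0).
  { unfold phi. rewrite vnorm_sub_self. replace (vsub x x) with (fun _ : Fin.t n => 0) by vext.
    rewrite inner_zero_r; ring. }
  set (Psi := fun y => phi y + LK * sqrt (rdist (g y) K * rdist (g y) K + eta * eta) + inner (vsub y x) (vsub y x)).
  set (T := fun y => True /\ vnorm (vsub y x) <= r1).
  assert (HT_W : forall y, T y -> W y /\ vnorm (vsub y x) < r).
  { intros y [_ Hy]. split; [apply (Hsub y); lra|lra]. }
  destruct (min_exists n T Psi x r1 (- L * r1) x) as [y0 [Ty0 Hmin]].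
  - apply closed_inter_ball. intros u z _ _; auto.
  - split; auto. rewrite vnorm_sub_self; lra.
  - intros y [_ Hy]; auto.
  - intros y [_ Hy]. unfold Psi.
    pose proof (Hlip y x). rewrite Hphix in H.
    pose proof (sqrt_pos (rdist (g y) K * rdist (g y) K + eta * eta)).
    pose proof (inner_self_nonneg n (vsub y x)).
    assert (L * vnorm (vsub y x) <= L * r1) by (apply Rmult_le_compat_l; lra).
    assert (0 <= LK * sqrt (rdist (g y) K * rdist (g y) K + eta * eta)) by (apply Rmult_le_pos; auto).
    lra.
  - intros y Ty eps' He'. destruct (HT_W y Ty) as [Wy Hyr]. destruct Ty as [_ Hyt].
    set (eg := eps' / (3 * (LK + 1))). assert (Heg : 0 < eg) by (unfold eg; apply Rdiv_lt_0_compat; lra).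
    destruct (diff_cont n m W g Dg y HC Wy eg Heg) as [d1 [Hd1 Hc1]].
    set (e3 := eps' / (3 * (L + 2 * r1 + 1))). assert (He3 : 0 < e3) by (unfold e3; apply Rdiv_lt_0_compat; lra).
    exists (Rmin 1 (Rmin d1 e3)). split; [repeat apply Rmin_glb_lt; lra|].
    intros y' [_ Hy't] Hyy.
    assert (Hy1 : vnorm (vsub y' y) < d1) by (eapply Rlt_le_trans; [apply Hyy|]; eapply Rle_trans; [apply Rmin_r|apply Rmin_l]).
    assert (Hy2 : vnorm (vsub y' y) < e3) by (eapply Rlt_le_trans; [apply Hyy|]; eapply Rle_trans; [apply Rmin_r|apply Rmin_r]).
    unfold Psi.
    pose proof (Hlip y' y) as Hl1.
    assert (Hs : Rabs (sqrt (rdist (g y) K * rdist (g y) K + eta * eta) - sqrt (rdist (g y') K * rdist (g y') K + eta * eta)) <= eg).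
    { eapply Rle_trans; [apply sqrt_lip; eapply rdist_nonneg; eauto|].
      eapply Rle_trans; [apply (rdist_lip_abs m _ _ K (g x) Kx)|].
      rewrite vnorm_sub_comm. left; apply Hc1; auto. }
    assert (Hin : inner (vsub y x) (vsub y x) - inner (vsub y' x) (vsub y' x) <= 2 * r1 * vnorm (vsub y' y)).
    { rewrite <- !vnorm_sq. pose proof (vnorm_sub_triangle n y y' x). rewrite (vnorm_sub_comm n y y') in H.
      pose proof (vnorm_nonneg n (vsub y x)). pose proof (vnorm_nonneg n (vsub y' x)). pose proof (vnorm_nonneg n (vsub y' y)).
      destruct (Rle_dec (vnorm (vsub y x)) (vnorm (vsub y' x))); nra. }
    pose proof (Rle_abs (sqrt (rdist (g y) K * rdist (g y) K + eta * eta) - sqrt (rdist (g y') K * rdist (g y') K + eta * eta))).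
    assert (LK * (sqrt (rdist (g y) K * rdist (g y) K + eta * eta) - sqrt (rdist (g y') K * rdist (g y') K + eta * eta)) <= LK * eg) by (apply Rmult_le_compat_l; lra).
    assert (LK * eg <= eps' / 3) by (unfold eg; apply Rle_trans with ((LK+1) * (eps' / (3 * (LK + 1)))); [apply Rmult_le_compat_r; [left; apply Rdiv_lt_0_compat; lra|lra] | right; field; lra]).
    assert ((L + 2 * r1) * vnorm (vsub y' y) <= eps' / 3).
    { apply Rle_trans with ((L + 2 * r1 + 1) * e3). pose proof (vnorm_nonneg n (vsub y' y)). nra.
      unfold e3; right; field; lra. }
    lra.
  - assert (HPsix : Psi x = LK * eta).
    { unfold Psi. rewrite Hphix, (rdist_self m (g x) K Kx), sqrt_eta by lra.
      replace (vsub x x) with (fun _ : Fin.t n => 0) by vext. rewrite inner_zero_r. ring. }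
    assert (Hlow : forall y, T y -> inner (vsub y x) (vsub y x) <= Psi y).
    { intros y Ty. destruct (HT_W y Ty) as [_ Hy]. specialize (Hpen y Hy).
      pose proof (sqrt_ge (rdist (g y) K) eta (rdist_nonneg m (g y) K (g x) Kx)).
      unfold Psi. fold LK in Hpen.
      assert (LK * rdist (g y) K <= LK * sqrt (rdist (g y) K * rdist (g y) K + eta * eta)) by (apply Rmult_le_compat_l; auto).
      lra. }
    assert (Hy0sq : vnorm (vsub y0 x) * vnorm (vsub y0 x) <= M / 64).
    { rewrite vnorm_sq. pose proof (Hlow y0 Ty0). assert (Tx : T x) by (split; auto; rewrite vnorm_sub_self; lra). pose proof (Hmin x Tx). lra. }
    pose proof (vnorm_nonneg n (vsub y0 x)) as Hy0n.
    assert (Hy0a : vnorm (vsub y0 x) <= r1 / 8) by nra.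
    assert (Hy0b : vnorm (vsub y0 x) <= eps / 8) by nra.
    destruct (HT_W y0 Ty0) as [Wy0 Hy0r].
    destruct (proj_exists m K (g y0) (g x) HK Kx) as [z0 [Kz0 Hz0]].
    set (d0 := vnorm (vsub (g y0) z0)).
    assert (Hd0 : rdist (g y0) K = d0) by (apply rdist_proj; auto).
    assert (Hd0le : d0 <= vnorm (vsub (g y0) (g x))) by (apply Hz0; auto).
    assert (Hgy0 : vnorm (vsub (g y0) (g x)) < eps / 2) by (apply Hgc; lra).
    pose proof (vnorm_nonneg m (vsub (g y0) z0)) as Hd0n. fold d0 in Hd0n.
    set (s0 := sqrt (d0 * d0 + eta * eta)).
    assert (Hs0 : 0 < s0) by (apply sqrt_lt_R0; nra).
    assert (Hs0d : d0 <= s0) by (apply sqrt_ge; auto).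
    assert (Hs0sq : s0 * s0 = d0 * d0 + eta * eta) by (apply sqrt_sqrt; nra).
    set (alpha := LK / s0). assert (Halpha : 0 <= alpha) by (unfold alpha; apply Rmult_le_pos; [lra|left; apply Rinv_0_lt_compat; lra]).
    set (mu := vscal alpha (vsub (g y0) z0)).
    set (G := vadd (mtapply (Dg y0) mu) (vscal 2 (vsub y0 x))).
    assert (Hstat : forall h, inner v h - e1 * vnorm h <= inner G h).
    { intros h.
      set (u := fun t => vsub (g (vadd y0 (vscal t h))) z0).
      set (w := fun t => vsub (vadd y0 (vscal t h)) x).
      set (F := fun t => LK * sqrt (inner (u t) (u t) + eta * eta) + inner (w t) (w t)).
      assert (E0 : vadd y0 (vscal 0 h) = y0) by vext.
      assert (Hu0 : u 0 = vsub (g y0) z0) by (unfold u; rewrite E0; auto).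
      assert (Hw0 : w 0 = vsub y0 x) by (unfold w; rewrite E0; auto).
      assert (HA0 : inner (u 0) (u 0) + eta * eta = s0 * s0) by (rewrite Hu0, <- vnorm_sq, Hs0sq; fold d0; ring).
      assert (HF : derivable_pt_lim F 0 (inner G h)).
      { assert (Hu' : forall i, derivable_pt_lim (fun t => u t i) 0 (mapply (Dg y0) h i)).
        { intros i. unfold u, vsub at 1.
          apply (deriv_minus_const_coord (fun t => g (vadd y0 (vscal t h)) i)).
          pose proof (deriv_coord n m W g Dg y0 h 0 i HC ltac:(rewrite E0; auto)). rewrite E0 in H. auto. }
        assert (HA : derivable_pt_lim (fun t => inner (u t) (u t) + eta * eta) 0 (2 * inner (u 0) (mapply (Dg y0) h))).
        { apply (deriv_plus_const (fun t => inner (u t) (u t))). apply deriv_normsq; auto. }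
        assert (HS : derivable_pt_lim (fun t => sqrt (inner (u t) (u t) + eta * eta)) 0
                      (/ (2 * sqrt (inner (u 0) (u 0) + eta * eta)) * (2 * inner (u 0) (mapply (Dg y0) h)))).
        { apply (derivable_pt_lim_comp (fun t => inner (u t) (u t) + eta * eta) sqrt); auto.
          apply derivable_pt_lim_sqrt. rewrite HA0. nra. }
        assert (HB : derivable_pt_lim (fun t => inner (w t) (w t)) 0 (2 * inner (w 0) h)).
        { apply deriv_normsq. intros i. apply deriv_affine_coord. }
        apply deriv_eq with (LK * (/ (2 * sqrt (inner (u 0) (u 0) + eta * eta)) * (2 * inner (u 0) (mapply (Dg y0) h))) + 2 * inner (w 0) h).
        - apply (derivable_pt_lim_plus (fun t => LK * sqrt (inner (u t) (u t) + eta * eta)) (fun t => inner (w t) (w t))); auto.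
          apply (derivable_pt_lim_scal (fun t => sqrt (inner (u t) (u t) + eta * eta))); auto.
        - rewrite HA0, sqrt_square by lra. rewrite Hu0, Hw0. unfold G. rewrite inner_add_l, inner_scal_l, inner_mtapply.
          unfold mu. rewrite inner_scal_l. unfold alpha. field. lra. }
      assert (Hineq : forall t, 0 < t -> t * vnorm h < r1 / 2 -> t * (inner v h - e1 * vnorm h) <= F t - F 0).
      { intros t Ht Hth. set (y' := vadd y0 (vscal t h)).
        assert (Hy'x : vnorm (vsub y' x) <= vnorm (vsub y0 x) + t * vnorm h).
        { replace (vsub y' x) with (vadd (vsub y0 x) (vscal t h)) by (unfold y'; vext).
          eapply Rle_trans; [apply vnorm_triangle|]. rewrite vnorm_scal, Rabs_right by lra. lra. }
        assert (Ty' : T y') by (split; auto; lra).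
        pose proof (Hmin y' Ty') as Hm.
        assert (HPsi0 : Psi y0 = phi y0 + F 0).
        { unfold Psi, F. rewrite Hd0, Hu0, Hw0. rewrite <- (vnorm_sq m (vsub (g y0) z0)). fold d0. ring. }
        assert (HPsi' : Psi y' <= phi y' + F t).
        { unfold Psi, F. fold y'. unfold u, w. fold y'.
          assert (rdist (g y') K <= vnorm (vsub (g y') z0)) by (apply rdist_le; auto).
          pose proof (rdist_nonneg m (g y') K (g x) Kx).
          assert (sqrt (rdist (g y') K * rdist (g y') K + eta * eta) <= sqrt (inner (vsub (g y') z0) (vsub (g y') z0) + eta * eta)).
          { apply sqrt_le_1_alt. rewrite <- vnorm_sq. nra. }
          assert (LK * sqrt (rdist (g y') K * rdist (g y') K + eta * eta) <= LK * sqrt (inner (vsub (g y') z0) (vsub (g y') z0) + eta * eta)) by (apply Rmult_le_compat_l; auto).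
          lra. }
        assert (Hphi' : phi y' - phi y0 <= t * (- inner v h + e1 * vnorm h)).
        { unfold phi. replace (vsub y' x) with (vadd (vsub y0 x) (vscal t h)) by (unfold y'; vext).
          rewrite inner_add_r, inner_scal_r.
          pose proof (vnorm_triangle n (vsub y0 x) (vscal t h)). rewrite vnorm_scal, Rabs_right in H by lra.
          assert (e1 * vnorm (vadd (vsub y0 x) (vscal t h)) <= e1 * (vnorm (vsub y0 x) + t * vnorm h)) by (apply Rmult_le_compat_l; unfold e1; lra).
          lra. }
        lra. }
      apply Rnot_lt_le; intros Hlt.
      set (gap := inner v h - e1 * vnorm h - inner G h).
      destruct (HF gap ltac:(unfold gap; lra)) as [dl Hdl].
      pose proof (vnorm_nonneg n h).
      set (t := Rmin (dl / 2) (r1 / (4 * (vnorm h + 1)))).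
      assert (Ht : 0 < t) by (apply Rmin_glb_lt; [pose proof (cond_pos dl); lra|apply Rdiv_lt_0_compat; lra]).
      assert (Ht1 : t <= dl / 2) by apply Rmin_l. assert (Ht2 : t <= r1 / (4 * (vnorm h + 1))) by apply Rmin_r.
      assert (Hth : t * vnorm h < r1 / 2).
      { apply Rle_lt_trans with (r1 / (4 * (vnorm h + 1)) * vnorm h); [apply Rmult_le_compat_r; lra|].
        apply Rle_lt_trans with (r1 / (4 * (vnorm h + 1)) * (vnorm h + 1)); [apply Rmult_le_compat_l; [left; apply Rdiv_lt_0_compat; lra|lra]|].
        replace (r1 / (4 * (vnorm h + 1)) * (vnorm h + 1)) with (r1/4) by (field; lra). lra. }
      specialize (Hineq t Ht Hth).
      assert (Hne : t <> 0) by lra.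
      assert (Hta : Rabs t < dl) by (rewrite Rabs_right by lra; pose proof (cond_pos dl); lra).
      specialize (Hdl t Hne Hta). replace (0 + t) with t in Hdl by ring.
      apply Rabs_def2 in Hdl. destruct Hdl as [Hdl1 Hdl2].
      assert ((F t - F 0) / t < inner v h - e1 * vnorm h) by (unfold gap in *; lra).
      apply (Rmult_lt_compat_r t) in H0; auto. replace ((F t - F 0) / t * t) with (F t - F 0) in H0 by (field; lra).
      lra. }
    assert (HvG : vnorm (vsub v G) <= e1).
    { specialize (Hstat (vsub v G)).
      assert (inner v (vsub v G) - inner G (vsub v G) = vnorm (vsub v G) * vnorm (vsub v G)) by (rewrite vnorm_sq, inner_sub_l; ring).
      pose proof (vnorm_nonneg n (vsub v G)). unfold e1 in *. nra. }
    exists y0, z0, mu. split; auto. split; [lra|]. split; auto. split.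
    { pose proof (vnorm_sub_triangle m z0 (g y0) (g x)). rewrite (vnorm_sub_comm m z0 (g y0)) in H. fold d0 in H. lra. }
    split.
    { split; auto. intros e' He'. exists (2 * e' / (alpha + 1)). split; [apply Rdiv_lt_0_compat; lra|].
      intros c Kc Hc. unfold mu. rewrite inner_scal_l.
      pose proof (proj_ineq m (g y0) z0 c (Hz0 c Kc)).
      pose proof (vnorm_nonneg m (vsub c z0)).
      assert (alpha * vnorm (vsub c z0) <= 2 * e').
      { apply Rle_trans with ((alpha + 1) * vnorm (vsub c z0)); [nra|].
        apply (Rmult_lt_compat_l (alpha+1)) in Hc; [|lra].
        replace ((alpha + 1) * (2 * e' / (alpha + 1))) with (2 * e') in Hc by (field; lra). lra. }
      apply Rle_trans with (alpha * (/ 2 * (vnorm (vsub c z0) * vnorm (vsub c z0)))); [apply Rmult_le_compat_l; auto|].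
      nra. }
    split.
    { unfold mu. rewrite vnorm_scal, Rabs_right by lra. fold d0.
      assert (alpha * d0 <= LK).
      { unfold alpha. apply Rle_trans with (LK / s0 * s0); [apply Rmult_le_compat_l; auto|right; field; lra]. }
      unfold LK, L, e1 in H. pose proof (vnorm_nonneg n v). nra. }
    replace (vsub (mtapply (Dg y0) mu) v) with (vsub (vscal (-1) (vsub v G)) (vscal 2 (vsub y0 x))) by (unfold G; vext).
    replace (vsub (vscal (-1) (vsub v G)) (vscal 2 (vsub y0 x))) with (vadd (vscal (-1) (vsub v G)) (vscal (-2) (vsub y0 x))) by vext.
    eapply Rle_trans; [apply vnorm_triangle|]. rewrite !vnorm_scal.
    replace (Rabs (-1)) with 1 by (rewrite Rabs_left by lra; ring).
    replace (Rabs (-2)) with 2 by (rewrite Rabs_left by lra; ring). unfold e1 in HvG. lra.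
Qed.

Lemma le_by_eps a b : (forall e, 0 < e -> a <= b + e) -> a <= b.
Proof. intros H. apply (le_eps a b 1 1); try lra. intros tau Ht. specialize (H tau ltac:(lra)). lra. Qed.

Lemma reg_normal_local n (S1 S2 : vec n -> Prop) x v r : 0 < r ->
  (forall y, vnorm (vsub y x) < r -> (S1 y <-> S2 y)) -> reg_normal S1 x v -> reg_normal S2 x v.
Proof. intros Hr Heq [Sx Hv]. split.
  - apply Heq; auto. rewrite vnorm_sub_self; lra.
  - intros e He. destruct (Hv e He) as [d [Hd H]]. exists (Rmin d r). split; [apply Rmin_glb_lt; auto|].
    intros y Sy Hy. apply H. apply Heq; auto. eapply Rlt_le_trans; [apply Hy|apply Rmin_r].
    eapply Rlt_le_trans; [apply Hy|apply Rmin_l]. Qed.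

Definition ev (P : nat -> Prop) := exists N, forall k, (N <= k)%nat -> P k.
Lemma ev_and P Q : ev P -> ev Q -> ev (fun k => P k /\ Q k).
Proof. intros [N1 H1] [N2 H2]. exists (N1 + N2)%nat. intros k Hk. split; [apply H1|apply H2]; lia. Qed.
Lemma ev_sub P phi : incr phi -> ev P -> ev (fun k => P (phi k)).
Proof. intros Hp [N H]. exists N. intros k Hk. apply H. pose proof (incr_ge phi Hp k). lia. Qed.
Lemma ev_inv e : 0 < e -> ev (fun k => 1 / (INR k + 1) < e).
Proof. intros He. destruct (small_inv e He) as [N H]. exists N; auto. Qed.
Lemma ev_conv n (u : nat -> vec n) x e : seq_conv u x -> 0 < e -> ev (fun k => vnorm (vsub (u k) x) < e).
Proof. intros H He. apply H; auto. Qed.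
Lemma ev_get P : ev P -> exists k, P k.
Proof. intros [N H]. exists N; auto. Qed.
Lemma ev_impl (P Q : nat -> Prop) : (forall k, P k -> Q k) -> ev P -> ev Q.
Proof. intros H [N HN]. exists N; auto. Qed.
Lemma inv_le1 k : 1 / (INR k + 1) <= 1.
Proof. pose proof (pos_INR k). apply (Rmult_le_reg_r (INR k + 1)); [lra|].
  unfold Rdiv. rewrite Rmult_assoc, Rinv_l by lra. lra. Qed.

Lemma normal_rep n m (W : vec n -> Prop) (g : vec n -> vec m) Dg (K : vec m -> Prop) (S' : vec n -> Prop) x v kappa rho :
  C1_on W g Dg -> is_closed K -> 0 <= kappa -> 0 < rho ->
  (forall y, vnorm (vsub y x) < rho -> W y /\ (S' y <-> K (g y)) /\
     Rbar_le (dist y (fun y => W y /\ K (g y))) (Rbar_scal kappa (dist (g y) K))) ->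
  W x -> K (g x) -> lim_normal S' x v ->
  exists lam, lim_normal K (g x) lam /\ mtapply (Dg x) lam = v /\ vnorm lam <= kappa * vnorm v.
Proof.
  intros HC HK Hkap Hr Hloc Wx Kx [_ [xk [vk [Hxk [Hxc [Hvc Hreg]]]]]].
  destruct (Hxc (rho/2) ltac:(lra)) as [N1 HN1].
  destruct (Hvc 1 ltac:(lra)) as [N2 HN2].
  set (N0 := (N1 + N2)%nat).
  set (xs := fun k => xk (N0 + k)%nat). set (vs := fun k => vk (N0 + k)%nat).
  assert (Hxs : forall k, vnorm (vsub (xs k) x) < rho/2) by (intros k; apply HN1; unfold N0; lia).
  assert (Hvs : forall k, vnorm (vsub (vs k) v) < 1) by (intros k; apply HN2; unfold N0; lia).
  assert (Hstep : forall k, exists t : vec n * vec m * vec m,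
     let '(y, z, mu) := t in
     W y /\ vnorm (vsub y (xs k)) < 1 / (INR k + 1) /\ K z /\ vnorm (vsub z (g (xs k))) < 1 / (INR k + 1) /\
     reg_normal K z mu /\ vnorm mu <= (vnorm (vs k) + 1 / (INR k + 1)) * kappa /\
     vnorm (vsub (mtapply (Dg y) mu) (vs k)) <= 1 / (INR k + 1)).
  { intros k.
    assert (Hxk' : vnorm (vsub (xs k) x) < rho) by (pose proof (Hxs k); lra).
    destruct (Hloc (xs k) Hxk') as [Wxk [Heqk _]].
    assert (Kxk : K (g (xs k))) by (apply Heqk, Hxk).
    destruct (A_reg n m W g Dg K kappa (xs k) (vs k) (rho/2) (1 / (INR k + 1)) HC HK Hkap ltac:(lra) (inv_pos k) Wxk Kxk)
      as [y [z [mu H]]].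
    - intros y Hy. assert (vnorm (vsub y x) < rho).
      { pose proof (vnorm_sub_triangle n y (xs k) x). pose proof (Hxs k). lra. }
      destruct (Hloc y H) as [Wy [_ Hb]]. auto.
    - apply (reg_normal_local n S' _ (xs k) (vs k) (rho/2)); [lra| |apply Hreg].
      intros y Hy. assert (vnorm (vsub y x) < rho).
      { pose proof (vnorm_sub_triangle n y (xs k) x). pose proof (Hxs k). lra. }
      destruct (Hloc y H) as [Wy [Hey _]]. split; [intros; split; auto; apply Hey; auto|intros [_ Hkk]; apply Hey; auto].
    - exists (y, z, mu). exact H. }
  set (tr := fun k => proj1_sig (constructive_indefinite_description _ (Hstep k))).
  assert (Htr : forall k, let '(y, z, mu) := tr k in
     W y /\ vnorm (vsub y (xs k)) < 1 / (INR k + 1) /\ K z /\ vnorm (vsub z (g (xs k))) < 1 / (INR k + 1) /\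
     reg_normal K z mu /\ vnorm mu <= (vnorm (vs k) + 1 / (INR k + 1)) * kappa /\
     vnorm (vsub (mtapply (Dg y) mu) (vs k)) <= 1 / (INR k + 1)).
  { intros k. unfold tr. destruct (constructive_indefinite_description _ (Hstep k)); simpl; auto. }
  set (ys := fun k => fst (fst (tr k))). set (zs := fun k => snd (fst (tr k))). set (mus := fun k => snd (tr k)).
  assert (Hall : forall k, W (ys k) /\ vnorm (vsub (ys k) (xs k)) < 1 / (INR k + 1) /\ K (zs k) /\
     vnorm (vsub (zs k) (g (xs k))) < 1 / (INR k + 1) /\
     reg_normal K (zs k) (mus k) /\ vnorm (mus k) <= (vnorm (vs k) + 1 / (INR k + 1)) * kappa /\
     vnorm (vsub (mtapply (Dg (ys k)) (mus k)) (vs k)) <= 1 / (INR k + 1)).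
  { intros k. specialize (Htr k). unfold ys, zs, mus. destruct (tr k) as [[y z] mu]. simpl. auto. }
  assert (Hxsc : seq_conv xs x).
  { intros e He. destruct (Hxc e He) as [N HN]. exists N. intros k Hk. apply HN. unfold N0; lia. }
  assert (Hvsc : seq_conv vs v).
  { intros e He. destruct (Hvc e He) as [N HN]. exists N. intros k Hk. apply HN. unfold N0; lia. }
  pose proof (vnorm_nonneg n v) as Hvn.
  assert (Hmub : forall k, vnorm (mus k) <= (vnorm v + 2) * kappa).
  { intros k. destruct (Hall k) as [_ [_ [_ [_ [_ [Hm _]]]]]].
    pose proof (Hvs k). pose proof (vnorm_sub_triangle n (vs k) v (fun _ => 0)).
    replace (vsub (vs k) (fun _ => 0)) with (vs k) in H0 by vext. replace (vsub v (fun _ => 0)) with v in H0 by vext.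
    pose proof (inv_le1 k). eapply Rle_trans; [apply Hm|]. apply Rmult_le_compat_r; auto. lra. }
  destruct (vec_bw m mus ((vnorm v + 2) * kappa) Hmub) as [phi [lam [Hphi Hmuc]]].
  set (B := (vnorm v + 2) * kappa). assert (HB : 0 <= B) by (unfold B; nra).
  assert (Hgc : forall e, 0 < e -> ev (fun k => vnorm (vsub (g (xs k)) (g x)) < e)).
  { intros e He. destruct (diff_cont n m W g Dg x HC Wx e He) as [d [Hd Hc]].
    apply (ev_impl (fun k => vnorm (vsub (xs k) x) < d)); [intros; apply Hc; auto|]. apply ev_conv; auto. }
  exists lam. split; [|split].
  - split; auto. exists (fun k => zs (phi k)), (fun k => mus (phi k)). split; [intros k; apply Hall|]. split; [|split; auto].
    + intros e He.
      pose proof (ev_and _ _ (ev_sub _ phi Hphi (Hgc (e/2) ltac:(lra))) (ev_sub _ phi Hphi (ev_inv (e/2) ltac:(lra)))).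
      destruct H as [N HN]. exists N. intros k Hk. destruct (HN k Hk) as [H1 H2].
      destruct (Hall (phi k)) as [_ [_ [_ [Hz _]]]].
      pose proof (vnorm_sub_triangle m (zs (phi k)) (g (xs (phi k))) (g x)). lra.
    + intros k; apply Hall.
  - set (a := fun k => mtapply (Dg (ys (phi k))) (mus (phi k))).
    apply (seq_conv_unique n a).
    + intros e He.
      destruct (Dg_cont n m W g Dg x HC Wx (e / (2 * (B+1) * (INR m * INR n + 1)))) as [d [Hd Hdc]].
      { apply Rdiv_lt_0_compat; [lra|]. pose proof (pos_INR m); pose proof (pos_INR n). apply Rmult_lt_0_compat; [lra|nra]. }
      pose proof (mnorm_nonneg _ _ (Dg x)) as Hmn.
      pose proof (ev_and _ _ (ev_sub _ phi Hphi (ev_conv n xs x (d/2) Hxsc ltac:(lra))) (ev_sub _ phi Hphi (ev_inv (d/2) ltac:(lra)))) as E1.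
      pose proof (ev_and _ _ E1 (Hmuc (e / (2 * (mnorm (Dg x) + 1))) ltac:(apply Rdiv_lt_0_compat; lra))) as E2.
      destruct E2 as [N HN]. exists N. intros k Hk. destruct (HN k Hk) as [[H1 H2] H3].
      destruct (Hall (phi k)) as [Wy [Hyx _]].
      assert (Hyx' : vnorm (vsub (ys (phi k)) x) < d).
      { pose proof (vnorm_sub_triangle n (ys (phi k)) (xs (phi k)) x). lra. }
      unfold a.
      replace (vsub (mtapply (Dg (ys (phi k))) (mus (phi k))) (mtapply (Dg x) lam))
        with (vadd (mtapply (msub (Dg (ys (phi k))) (Dg x)) (mus (phi k))) (mtapply (Dg x) (vsub (mus (phi k)) lam)))
        by (rewrite mtapply_msub, mtapply_sub; vext).
      eapply Rle_lt_trans; [apply vnorm_triangle|].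
      pose proof (mtapply_bound _ _ (msub (Dg (ys (phi k))) (Dg x)) (mus (phi k))).
      pose proof (mtapply_bound _ _ (Dg x) (vsub (mus (phi k)) lam)).
      assert (Hms : mnorm (msub (Dg (ys (phi k))) (Dg x)) <= e / (2 * (B+1))).
      { eapply Rle_trans; [apply mnorm_small|]. intros i j. left. apply Hdc; auto.
        pose proof (pos_INR m); pose proof (pos_INR n).
        apply Rle_trans with ((INR m * INR n + 1) * (e / (2 * (B + 1) * (INR m * INR n + 1)))).
        - apply Rmult_le_compat_r; [left; apply Rdiv_lt_0_compat; [lra|apply Rmult_lt_0_compat; nra]|lra].
        - right; field; nra. }
      pose proof (Hmub (phi k)). fold B in H4. pose proof (vnorm_nonneg m (mus (phi k))).
      pose proof (mnorm_nonneg _ _ (msub (Dg (ys (phi k))) (Dg x))).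
      assert (mnorm (msub (Dg (ys (phi k))) (Dg x)) * vnorm (mus (phi k)) <= e / (2 * (B + 1)) * B) by (apply Rmult_le_compat; auto).
      assert (e / (2 * (B + 1)) * B < e / 2).
      { apply Rlt_le_trans with (e / (2 * (B + 1)) * (B + 1)); [apply Rmult_lt_compat_l; [apply Rdiv_lt_0_compat; lra|lra]|right; field; lra]. }
      assert (mnorm (Dg x) * vnorm (vsub (mus (phi k)) lam) <= e / 2).
      { apply Rle_trans with ((mnorm (Dg x) + 1) * (e / (2 * (mnorm (Dg x) + 1)))).
        - pose proof (vnorm_nonneg m (vsub (mus (phi k)) lam)). apply Rmult_le_compat; lra.
        - right; field; lra. }
      lra.
    + intros e He.
      pose proof (ev_and _ _ (ev_sub _ phi Hphi (ev_conv n vs v (e/2) Hvsc ltac:(lra))) (ev_sub _ phi Hphi (ev_inv (e/2) ltac:(lra)))) as E.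
      destruct E as [N HN]. exists N. intros k Hk. destruct (HN k Hk) as [H1 H2].
      destruct (Hall (phi k)) as [_ [_ [_ [_ [_ [_ Ha]]]]]].
      pose proof (vnorm_sub_triangle n (a k) (vs (phi k)) v). unfold a in *. lra.
  - apply le_by_eps. intros e He.
    set (e4 := e / (4 * (kappa + 1))). assert (He4 : 0 < e4) by (unfold e4; apply Rdiv_lt_0_compat; lra).
    pose proof (ev_and _ _ (ev_sub _ phi Hphi (ev_conv n vs v e4 Hvsc He4)) (ev_sub _ phi Hphi (ev_inv e4 He4))) as E1.
    pose proof (ev_and _ _ E1 (Hmuc (e/2) ltac:(lra))) as E2.
    destruct (ev_get _ E2) as [k [[H1 H2] H3]].
    destruct (Hall (phi k)) as [_ [_ [_ [_ [_ [Hm _]]]]]].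
    pose proof (vnorm_sub_triangle m lam (mus (phi k)) (fun _ => 0)).
    replace (vsub lam (fun _ => 0)) with lam in H by vext.
    replace (vsub (mus (phi k)) (fun _ => 0)) with (mus (phi k)) in H by vext.
    rewrite vnorm_sub_comm in H.
    pose proof (vnorm_sub_triangle n (vs (phi k)) v (fun _ => 0)).
    replace (vsub (vs (phi k)) (fun _ => 0)) with (vs (phi k)) in H0 by vext.
    replace (vsub v (fun _ => 0)) with v in H0 by vext.
    assert (kappa * (2 * e4) <= e / 2).
    { unfold e4. apply Rle_trans with ((kappa + 1) * (2 * (e / (4 * (kappa + 1))))).
      - apply Rmult_le_compat_r; [unfold e4 in He4; lra|lra].
      - right; field; lra. }
    assert ((vnorm (vs (phi k)) + 1 / (INR (phi k) + 1)) * kappa <= (vnorm v + 2 * e4) * kappa) by (apply Rmult_le_compat_r; lra).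
    nra.
Qed.

Lemma inner_zero_l n (v : vec n) : inner (fun _ => 0) v = 0.
Proof. rewrite inner_comm. apply inner_zero_r. Qed.

Lemma convex_reg_normal n (Q : vec n -> Prop) b0 mu : is_convex Q -> reg_normal Q b0 mu ->
  forall b, Q b -> inner mu (vsub b b0) <= 0.
Proof. intros Hcv [Qb0 Hreg] b Qb. apply Rnot_lt_le; intros Hc.
  set (c := inner mu (vsub b b0)). set (D := vnorm (vsub b b0)).
  assert (HD : 0 < D).
  { destruct (Rle_lt_or_eq_dec 0 D (vnorm_nonneg _ _)) as [Hl|E]; auto. symmetry in E.
    apply vnorm_eq0 in E. unfold c in Hc. rewrite E, inner_zero_r in Hc. lra. }
  assert (Hc2 : 0 < c) by exact Hc.
  assert (Hcd : 0 < c / (2 * D)) by (apply Rdiv_lt_0_compat; lra).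
  destruct (Hreg (c / (2 * D)) Hcd) as [dd [Hd H]].
  set (t := Rmin 1 (dd / (2 * D))). assert (Ht : 0 < t) by (apply Rmin_glb_lt; [lra|apply Rdiv_lt_0_compat; lra]).
  assert (Ht1 : t <= 1) by apply Rmin_l. assert (Ht2 : t <= dd / (2 * D)) by apply Rmin_r.
  set (bt := vadd (vscal t b) (vscal (1 - t) b0)).
  assert (Qbt : Q bt) by (apply Hcv; auto; lra).
  assert (E : vsub bt b0 = vscal t (vsub b b0)) by (unfold bt; vext).
  assert (Hn : vnorm (vsub bt b0) < dd).
  { rewrite E, vnorm_scal, Rabs_right by lra. fold D.
    apply Rle_lt_trans with (dd / (2 * D) * D); [apply Rmult_le_compat_r; lra|].
    replace (dd / (2 * D) * D) with (dd/2) by (field; lra). lra. }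
  specialize (H bt Qbt Hn). rewrite E, inner_scal_r, vnorm_scal, Rabs_right in H by lra. fold c D in H.
  replace (c / (2 * D) * (t * D)) with (t * (c / 2)) in H by (field; lra). nra. Qed.

Lemma convex_normal n (Q : vec n -> Prop) b mu : is_convex Q -> lim_normal Q b mu ->
  forall b', Q b' -> inner mu (vsub b' b) <= 0.
Proof. intros Hcv [Qb [bk [mk [Hbk [Hbc [Hmc Hreg]]]]]] b' Qb'.
  apply le_by_eps. intros e He.
  pose proof (vnorm_nonneg n mu). pose proof (vnorm_nonneg n (vsub b' b)).
  set (e2 := e / (2 * (vnorm (vsub b' b) + vnorm mu + 2))).
  assert (He2 : 0 < e2) by (unfold e2; apply Rdiv_lt_0_compat; lra).
  set (e3 := Rmin e2 1). assert (He3 : 0 < e3) by (apply Rmin_glb_lt; lra).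
  assert (He3a : e3 <= e2) by apply Rmin_l. assert (He3b : e3 <= 1) by apply Rmin_r.
  destruct (ev_get _ (ev_and _ _ (ev_conv n bk b e3 Hbc He3) (ev_conv n mk mu e3 Hmc He3))) as [k [H1 H2]].
  pose proof (convex_reg_normal n Q (bk k) (mk k) Hcv (Hreg k) b' Qb').
  assert (E : inner mu (vsub b' b) = inner (mk k) (vsub b' (bk k)) + inner (vsub mu (mk k)) (vsub b' b) + inner (mk k) (vsub (bk k) b)).
  { rewrite inner_sub_l. rewrite !inner_sub_r. ring. }
  rewrite E.
  pose proof (inner_le n (vsub mu (mk k)) (vsub b' b)).
  pose proof (inner_le n (mk k) (vsub (bk k) b)).
  rewrite vnorm_sub_comm in H2.
  assert (vnorm (mk k) <= vnorm mu + 1).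
  { pose proof (vnorm_sub_triangle n (mk k) mu (fun _ => 0)).
    replace (vsub (mk k) (fun _ => 0)) with (mk k) in H6 by vext. replace (vsub mu (fun _ => 0)) with mu in H6 by vext.
    rewrite vnorm_sub_comm in H6. lra. }
  assert (vnorm (vsub mu (mk k)) * vnorm (vsub b' b) <= e3 * vnorm (vsub b' b)) by (apply Rmult_le_compat_r; lra).
  assert (vnorm (mk k) * vnorm (vsub (bk k) b) <= (vnorm mu + 1) * e3) by (apply Rmult_le_compat; try lra; apply vnorm_nonneg).
  assert (e3 * (vnorm (vsub b' b) + vnorm mu + 1) <= e / 2).
  { apply Rle_trans with (e2 * (vnorm (vsub b' b) + vnorm mu + 2)); [apply Rmult_le_compat; lra|].
    unfold e2. right; field; lra. }
  nra. Qed.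

Lemma lemma_E l (C : vec l -> Prop) zb kappa1 : subamenable C zb -> 0 <= kappa1 ->
  forall theta, 0 < theta -> exists rho, 0 < rho /\ forall z u lam, C z -> vnorm (vsub z zb) < rho ->
    vnorm (vsub u z) < rho -> lim_normal C z lam -> vnorm lam <= kappa1 ->
    inner lam (vsub u z) <= kappa1 * rdist u C + 2 * theta * vnorm (vsub u z).
Proof.
  intros [Czb [W [d [q [Dq [Q [HW [Wzb [HC1 [HQc [HQv [Heq [kq [Hkq [dq [Hdq Hbnd]]]]]]]]]]]]]]]] Hk1 theta Hth.
  destruct (HW zb Wzb) as [rW [HrW HballW]].
  set (rho0 := Rmin rW dq). assert (Hr0 : 0 < rho0) by (apply Rmin_glb_lt; auto).
  assert (Hr0a : rho0 <= rW) by apply Rmin_l. assert (Hr0b : rho0 <= dq) by apply Rmin_r.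
  set (th' := theta / (kq * kappa1 + 1)). assert (Hth' : 0 < th') by (unfold th'; apply Rdiv_lt_0_compat; nra).
  destruct (unif_diff l d W q Dq zb rho0 HC1 Wzb Hr0 ltac:(intros y Hy; apply HballW; lra) th' Hth') as [r1 [Hr1 [Hr1b Hud]]].
  assert (HU : forall z c lam, C z -> vnorm (vsub z zb) < r1 / 2 -> C c -> vnorm (vsub c zb) < r1 ->
      lim_normal C z lam -> vnorm lam <= kappa1 -> inner lam (vsub c z) <= theta * vnorm (vsub c z)).
  { intros z c lam Cz Hz Cc Hc Hlam Hlk.
    assert (Wz : W z) by (apply HballW; lra).
    destruct (normal_rep l d W q Dq Q C z lam kq (r1/2) HC1 HQc Hkq ltac:(lra)) as [mu [Hmu [Hmut Hmun]]].
    - intros y Hy. assert (vnorm (vsub y zb) < r1) by (pose proof (vnorm_sub_triangle l y z zb); lra).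
      split; [apply HballW; lra|]. split; [apply Heq, HballW; lra|]. apply Hbnd. lra.
    - auto.
    - apply Heq; auto.
    - auto.
    - assert (Wc : W c) by (apply HballW; lra). assert (Qc : Q (q c)) by (apply Heq; auto).
      pose proof (convex_normal d Q (q z) mu HQv Hmu (q c) Qc).
      rewrite <- Hmut, inner_mtapply.
      specialize (Hud z c ltac:(lra) Hc).
      assert (E : mapply (Dq z) (vsub c z) = vsub (vsub (q c) (q z)) (vsub (vsub (q c) (q z)) (mapply (Dq z) (vsub c z)))) by vext.
      rewrite E, inner_sub_r.
      pose proof (cauchy_schwarz d mu (vsub (vsub (q c) (q z)) (mapply (Dq z) (vsub c z)))).
      pose proof (Rle_abs (- inner mu (vsub (vsub (q c) (q z)) (mapply (Dq z) (vsub c z))))). rewrite Rabs_Ropp in *.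
      pose proof (vnorm_nonneg d mu). pose proof (vnorm_nonneg l (vsub c z)).
      assert (vnorm mu <= kq * kappa1) by (apply Rle_trans with (kq * vnorm lam); [auto|apply Rmult_le_compat_l; auto]).
      assert (vnorm mu * vnorm (vsub (vsub (q c) (q z)) (mapply (Dq z) (vsub c z))) <= kq * kappa1 * (th' * vnorm (vsub c z))) by (apply Rmult_le_compat; auto; apply vnorm_nonneg).
      assert (kq * kappa1 * th' <= theta).
      { unfold th'. apply Rle_trans with ((kq * kappa1 + 1) * (theta / (kq * kappa1 + 1))).
        - apply Rmult_le_compat_r; [left; apply Rdiv_lt_0_compat; nra|lra].
        - right; field; nra. }
      assert (kq * kappa1 * (th' * vnorm (vsub c z)) <= theta * vnorm (vsub c z)) by (rewrite <- Rmult_assoc; apply Rmult_le_compat_r; auto).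
      lra. }
  exists (r1 / 4). split; [lra|]. intros z u lam Cz Hz Hu Hlam Hlk.
  pose proof (rdist_spec l u C z Cz) as [_ [Hr0' [Hrle Happ]]].
  pose proof (Hrle z Cz) as Hrz.
  pose proof (vnorm_nonneg l lam).
  apply (le_eps _ _ (kappa1 + theta) (r1 / 4)); [lra|lra|]. intros tau Htau.
  destruct (Happ tau ltac:(lra)) as [c [Cc Hc]].
  assert (Hcz : vnorm (vsub c z) <= 2 * vnorm (vsub u z) + tau).
  { pose proof (vnorm_sub_triangle l c u z). rewrite (vnorm_sub_comm l c u) in H0. lra. }
  assert (Hczb : vnorm (vsub c zb) < r1).
  { pose proof (vnorm_sub_triangle l c z zb). lra. }
  pose proof (HU z c lam Cz ltac:(lra) Cc Hczb Hlam Hlk).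
  assert (E : inner lam (vsub u z) = inner lam (vsub u c) + inner lam (vsub c z)) by (rewrite <- inner_add_r; f_equal; vext).
  rewrite E. pose proof (inner_le l lam (vsub u c)).
  assert (vnorm lam * vnorm (vsub u c) <= kappa1 * (rdist u C + tau)) by (apply Rmult_le_compat; auto; try lra; apply vnorm_nonneg).
  assert (theta * vnorm (vsub c z) <= theta * (2 * vnorm (vsub u z) + tau)) by (apply Rmult_le_compat_l; lra).
  nra. Qed.

Lemma nearest_reg_normal n (S : vec n -> Prop) x p : S p ->
  (forall y, S y -> vnorm (vsub x p) <= vnorm (vsub x y)) -> 0 < vnorm (vsub x p) ->
  reg_normal S p (vscal (/ vnorm (vsub x p)) (vsub x p)).
Proof. intros Sp Hp Ht. split; auto. intros e He. set (t := vnorm (vsub x p)) in *.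
  exists (2 * e * t). split; [nra|]. intros y Sy Hy.
  rewrite inner_scal_l. pose proof (proj_ineq n x p y (Hp y Sy)). fold t in H.
  pose proof (vnorm_nonneg n (vsub y p)).
  assert (Hi : 0 < / t) by (apply Rinv_0_lt_compat; auto).
  apply Rle_trans with (/ t * (/ 2 * (vnorm (vsub y p) * vnorm (vsub y p)))); [apply Rmult_le_compat_l; lra|].
  assert (/ t * vnorm (vsub y p) <= 2 * e).
  { apply Rle_trans with (/ t * (2 * e * t)); [apply Rmult_le_compat_l; lra|]. right; field; lra. }
  nra. Qed.

Lemma reg_to_lim n (S : vec n -> Prop) p w : reg_normal S p w -> lim_normal S p w.
Proof. intros H. split; [apply H|]. exists (fun _ => p), (fun _ => w). split; [intros; apply H|].
  split; [intros e He; exists 0%nat; intros; rewrite vnorm_sub_self; lra|].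
  split; [intros e He; exists 0%nat; intros; rewrite vnorm_sub_self; lra|]. intros; auto. Qed.

Lemma preimage_closed n l (f : vec n -> vec l) Df C : is_C1 f Df -> is_closed C -> is_closed (preimage f C).
Proof. intros HC HCl u y Hu Hconv. unfold preimage in *. apply (HCl (fun k => f (u k))); auto.
  intros e He. destruct (diff_cont n l (fun _ => True) f Df y HC I e He) as [d [Hd Hc]].
  destruct (Hconv d Hd) as [N HN]. exists N. intros k Hk. apply Hc; auto. Qed.

Lemma partB n l (f : vec n -> vec l) Df (C : vec l -> Prop) xb kappa1 kappa2 eps0 :
  is_C1 f Df -> is_closed C -> C (f xb) -> subamenable C (f xb) -> 0 < kappa1 -> kappa1 < kappa2 -> 0 < eps0 ->
  (forall x, C (f x) -> vnorm (vsub x xb) < eps0 -> forall w, lim_normal (preimage f C) x w -> vnorm w <= 1 ->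
     exists lam, lim_normal C (f x) lam /\ mtapply (Df x) lam = w /\ vnorm lam <= kappa1) ->
  subreg_bound f (fun _ => True) C xb kappa2.
Proof.
  intros HC HCl Cxb Hsa Hk1 Hk12 He0 Hh.
  set (Dl := 1 - kappa1 / kappa2).
  assert (HDl : 0 < Dl /\ Dl <= 1).
  { unfold Dl. split.
    - assert (kappa1 / kappa2 < 1) by (apply (Rmult_lt_reg_r kappa2); [lra|]; unfold Rdiv; rewrite Rmult_assoc, Rinv_l by lra; lra). lra.
    - assert (0 <= kappa1 / kappa2) by (apply Rmult_le_pos; [lra|left; apply Rinv_0_lt_compat; lra]). lra. }
  destruct (Dg_cont n l (fun _ => True) f Df xb HC I 1 ltac:(lra)) as [rM [HrM HMc]].
  set (M := mnorm (Df xb) + INR l * INR n * 1).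
  assert (HM0 : 0 <= M) by (unfold M; pose proof (mnorm_nonneg _ _ (Df xb)); pose proof (pos_INR l); pose proof (pos_INR n); nra).
  assert (HMb : forall y, vnorm (vsub y xb) < rM -> mnorm (Df y) <= M).
  { intros y Hy. apply mnorm_close. intros i j. left. apply HMc; auto. }
  set (th1 := Dl / (4 * (kappa1 + 1))). assert (Hth1 : 0 < th1) by (unfold th1; apply Rdiv_lt_0_compat; lra).
  destruct (unif_diff n l (fun _ => True) f Df xb 1 HC I ltac:(lra) (fun _ _ => I) th1 Hth1) as [r1 [Hr1 [_ Hud]]].
  set (th := Dl / (8 * (M + 2))). assert (Hth : 0 < th) by (unfold th; apply Rdiv_lt_0_compat; lra).
  destruct (lemma_E l C (f xb) kappa1 Hsa ltac:(lra) th Hth) as [rE [HrE HE]].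
  destruct (diff_cont n l (fun _ => True) f Df xb HC I rE HrE) as [df [Hdf Hfc]].
  set (delta := Rmin (Rmin (Rmin (eps0/2) (rM/2)) (Rmin (r1/2) (df/2))) (rE / (2 * (M + 2)))).
  assert (Hdel : 0 < delta) by (unfold delta; repeat apply Rmin_glb_lt; try lra; apply Rdiv_lt_0_compat; lra).
  assert (Hd1 : delta <= eps0/2) by (unfold delta; eapply Rle_trans; [apply Rmin_l|]; eapply Rle_trans; [apply Rmin_l|apply Rmin_l]).
  assert (Hd2 : delta <= rM/2) by (unfold delta; eapply Rle_trans; [apply Rmin_l|]; eapply Rle_trans; [apply Rmin_l|apply Rmin_r]).
  assert (Hd3 : delta <= r1/2) by (unfold delta; eapply Rle_trans; [apply Rmin_l|]; eapply Rle_trans; [apply Rmin_r|apply Rmin_l]).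
  assert (Hd4 : delta <= df/2) by (unfold delta; eapply Rle_trans; [apply Rmin_l|]; eapply Rle_trans; [apply Rmin_r|apply Rmin_r]).
  assert (Hd5 : delta <= rE / (2 * (M + 2))) by (unfold delta; apply Rmin_r).
  exists delta. split; auto. intros x Hx.
  assert (ES : (fun y : vec n => True /\ C (f y)) = preimage f C).
  { apply functional_extensionality; intro y; apply propositional_extensionality; unfold preimage; tauto. }
  rewrite ES.
  assert (Sxb : preimage f C xb) by (unfold preimage; auto).
  destruct (proj_exists n (preimage f C) x xb (preimage_closed n l f Df C HC HCl) Sxb) as [p [Sp Hp]].
  destruct (rdist_spec n x (preimage f C) xb Sxb) as [HdS _].
  destruct (rdist_spec l (f x) C (f xb) Cxb) as [HdC [HdC0 _]].
  rewrite HdS, HdC, (rdist_proj n (preimage f C) x p Sp Hp). simpl.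
  set (t := vnorm (vsub x p)). set (dC := rdist (f x) C).
  assert (Htx : t <= vnorm (vsub x xb)) by (apply Hp; auto).
  assert (Hpx : vnorm (vsub p xb) < 2 * delta).
  { pose proof (vnorm_sub_triangle n p x xb). rewrite (vnorm_sub_comm n p x) in H. fold t in H. lra. }
  pose proof (vnorm_nonneg n (vsub x p)) as Ht0. fold t in Ht0.
  destruct (Rle_lt_or_eq_dec 0 t Ht0) as [Htp|Ht]; [|rewrite <- Ht; pose proof (Rmult_le_pos kappa2 dC ltac:(lra) HdC0); lra].
  set (w := vscal (/ t) (vsub x p)).
  assert (Hw : lim_normal (preimage f C) p w) by (apply reg_to_lim, nearest_reg_normal; auto).
  assert (Hwn : vnorm w = 1).
  { unfold w. rewrite vnorm_scal, Rabs_right by (left; apply Rinv_0_lt_compat; lra). fold t. field; lra. }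
  destruct (Hh p Sp ltac:(lra) w Hw ltac:(lra)) as [lam [Hlam [Hlt Hln]]].
  set (h := vsub x p). set (A := Df p).
  set (r := vsub (vsub (f x) (f p)) (mapply A h)).
  assert (Hr : vnorm r <= th1 * t) by (unfold r, A, h, t; apply Hud; lra).
  assert (HA : vnorm (mapply A h) <= M * t).
  { eapply Rle_trans; [apply mapply_bound|]. apply Rmult_le_compat_r; [apply vnorm_nonneg|]. apply HMb; lra. }
  assert (Hfxp : vnorm (vsub (f x) (f p)) <= (M + 1) * t).
  { replace (vsub (f x) (f p)) with (vadd (mapply A h) r) by (unfold r; vext).
    eapply Rle_trans; [apply vnorm_triangle|].
    assert (th1 <= 1) by (unfold th1; apply Rle_trans with (Dl / (4 * 1)); [apply Rmult_le_compat_l; [lra|apply Rinv_le_contravar; lra]|lra]).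
    nra. }
  assert (Hinner : inner lam (vsub (f x) (f p)) = t + inner lam r).
  { replace (vsub (f x) (f p)) with (vadd (mapply A h) r) by (unfold r; vext).
    rewrite inner_add_r. unfold A. rewrite <- inner_mtapply, Hlt. unfold w, h. rewrite inner_scal_l, <- vnorm_sq. fold t. field. lra. }
  assert (Hlr : - (kappa1 * (th1 * t)) <= inner lam r).
  { pose proof (cauchy_schwarz l lam r). pose proof (Rle_abs (- inner lam r)). rewrite Rabs_Ropp in H0.
    pose proof (vnorm_nonneg l lam). pose proof (vnorm_nonneg l r).
    assert (vnorm lam * vnorm r <= kappa1 * (th1 * t)) by (apply Rmult_le_compat; auto). lra. }
  assert (HEu : inner lam (vsub (f x) (f p)) <= kappa1 * dC + 2 * th * vnorm (vsub (f x) (f p))).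
  { apply HE; auto.
    - apply Hfc. lra.
    - apply Rle_lt_trans with ((M + 1) * t); auto.
      apply Rle_lt_trans with ((M + 2) * delta); [apply Rmult_le_compat; lra|].
      apply Rle_lt_trans with ((M + 2) * (rE / (2 * (M + 2)))); [apply Rmult_le_compat_l; lra|].
      replace ((M + 2) * (rE / (2 * (M + 2)))) with (rE/2) by (field; lra). lra. }
  assert (Hc1 : kappa1 * th1 <= Dl / 4).
  { unfold th1. apply Rle_trans with ((kappa1 + 1) * (Dl / (4 * (kappa1 + 1)))); [apply Rmult_le_compat_r; [left; apply Rdiv_lt_0_compat; lra|lra]|].
    right; field; lra. }
  assert (Hc2 : 2 * th * (M + 1) <= Dl / 4).
  { unfold th. apply Rle_trans with (2 * (Dl / (8 * (M + 2))) * (M + 2)); [apply Rmult_le_compat_l; [left; apply Rmult_lt_0_compat; [lra|apply Rdiv_lt_0_compat; lra]|lra]|].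
    right; field; lra. }
  assert (Hfin : t * (1 - Dl / 2) <= kappa1 * dC).
  { assert (2 * th * vnorm (vsub (f x) (f p)) <= 2 * th * ((M + 1) * t)) by (apply Rmult_le_compat_l; lra).
    assert (kappa1 * (th1 * t) <= Dl / 4 * t) by (rewrite <- Rmult_assoc; apply Rmult_le_compat_r; lra).
    assert (2 * th * ((M + 1) * t) <= Dl / 4 * t) by (replace (2 * th * ((M + 1) * t)) with (2 * th * (M + 1) * t) by ring; apply Rmult_le_compat_r; lra).
    lra. }
  assert (Hk : kappa1 / kappa2 = 1 - Dl) by (unfold Dl; ring).
  assert (t * (kappa1 / kappa2) <= kappa1 * dC) by (rewrite Hk; nra).
  apply (Rmult_le_reg_l (kappa1 / kappa2)); [apply Rdiv_lt_0_compat; lra|].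
  replace (kappa1 / kappa2 * (kappa2 * dC)) with (kappa1 * dC) by (field; lra). lra.
Qed.

Lemma partA n l (f : vec n -> vec l) Df (C : vec l -> Prop) xb kappa :
  is_C1 f Df -> is_closed C -> 0 <= kappa -> subreg_bound f (fun _ => True) C xb kappa ->
  exists eps, 0 < eps /\ forall x, C (f x) -> vnorm (vsub x xb) < eps -> forall v, lim_normal (preimage f C) x v ->
    exists lam, lim_normal C (f x) lam /\ mtapply (Df x) lam = v /\ vnorm lam <= kappa * vnorm v.
Proof. intros HC HCl Hk [d [Hd Hb]]. exists (d/2). split; [lra|]. intros x Cx Hx v Hv.
  apply (normal_rep n l (fun _ => True) f Df C (preimage f C) x v kappa (d/2)); auto; try lra.
  intros y Hy. split; [auto|]. split; [unfold preimage; tauto|]. apply Hb.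
  pose proof (vnorm_sub_triangle n y x xb). lra. Qed.

Lemma lim_normal_cone m (K : vec m -> Prop) z lam tau : lim_normal K z lam -> 0 <= tau -> lim_normal K z (vscal tau lam).
Proof. intros [Kz [zk [lk [Hzk [Hzc [Hlc Hreg]]]]]] Ht. split; auto.
  exists zk, (fun k => vscal tau (lk k)). split; auto. split; auto. split.
  - intros e He. destruct (Hlc (e / (tau + 1)) ltac:(apply Rdiv_lt_0_compat; lra)) as [N HN]. exists N. intros k Hk.
    replace (vsub (vscal tau (lk k)) (vscal tau lam)) with (vscal tau (vsub (lk k) lam)) by vext.
    rewrite vnorm_scal, Rabs_right by lra. specialize (HN k Hk).
    apply Rle_lt_trans with ((tau + 1) * vnorm (vsub (lk k) lam)); [pose proof (vnorm_nonneg m (vsub (lk k) lam)); nra|].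
    apply Rlt_le_trans with ((tau + 1) * (e / (tau + 1))); [apply Rmult_lt_compat_l; lra|right; field; lra].
  - intros k. destruct (Hreg k) as [Kzk Hr]. split; auto. intros e He.
    destruct (Hr (e / (tau + 1)) ltac:(apply Rdiv_lt_0_compat; lra)) as [d [Hd H]]. exists d. split; auto.
    intros y Ky Hy. rewrite inner_scal_l. specialize (H y Ky Hy). pose proof (vnorm_nonneg m (vsub y (zk k))).
    apply Rle_trans with (tau * (e / (tau + 1) * vnorm (vsub y (zk k)))); [apply Rmult_le_compat_l; lra|].
    rewrite <- Rmult_assoc. apply Rmult_le_compat_r; auto.
    apply Rle_trans with ((tau + 1) * (e / (tau + 1))); [apply Rmult_le_compat_r; [left; apply Rdiv_lt_0_compat; lra|lra]|right; field; lra].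
Qed.

Lemma lim_normal_zero m (K : vec m -> Prop) z : K z -> lim_normal K z (fun _ => 0).
Proof. intros Kz. apply reg_to_lim. split; auto. intros e He. exists 1. split; [lra|]. intros y _ _.
  rewrite inner_zero_l. pose proof (vnorm_nonneg m (vsub y z)). nra. Qed.

Lemma mtapply_zero l n (A : mat l n) : mtapply A (fun _ => 0) = (fun _ => 0).
Proof. apply functional_extensionality; intro j. unfold mtapply.
  transitivity (sumF l (fun _ => 0)). apply sumF_ext; intros; ring. apply sumF_zero. Qed.

Lemma Rbar_le_eps x a : (forall e, 0 < e -> Rbar_le x (Finite (a + e))) -> Rbar_le x (Finite a).
Proof. intros H. destruct x as [r| |]; simpl; auto.
  - apply le_by_eps. intros e He. specialize (H e He). simpl in H. auto.
  - specialize (H 1 ltac:(lra)). simpl in H. auto. Qed.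

Lemma h1_nonneg n l (f : vec n -> vec l) Df (C : vec l -> Prop) x : C (f x) -> Rbar_le (Finite 0) (h1 f Df C x).
Proof. intros Cx. unfold h1. eapply Rbar_le_trans; [|apply sup_ge; exists (fun _ => 0); split; [|split; [|reflexivity]]].
  - apply inf_ge. intros t [lam [_ [_ ->]]]. simpl. apply vnorm_nonneg.
  - apply lim_normal_zero. unfold preimage; auto.
  - rewrite vnorm_zero; lra. Qed.

Lemma h12 n l (f : vec n -> vec l) Df (C : vec l -> Prop) x : C (f x) -> h1 f Df C x = h2 f Df C x.
Proof. intros Cx. apply Rbar_le_antisym.
  - unfold h2. apply inf_ge. intros t [tau [-> [Htau HP]]]. unfold h1. apply sup_le. intros s [v [Hv [Hvn ->]]].
    destruct (HP v Hv Hvn) as [lam [Hlam [Hln Hv']]].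
    eapply Rbar_le_trans; [apply inf_le; exists (vscal tau lam); split; [apply lim_normal_cone; auto|split; [rewrite mtapply_scal; auto|reflexivity]]|].
    simpl. rewrite vnorm_scal, Rabs_right by lra. pose proof (vnorm_nonneg l lam). nra.
  - pose proof (h1_nonneg n l f Df C x Cx) as H0.
    destruct (h1 f Df C x) as [a| |] eqn:E; [| destruct (h2 f Df C x); simpl; auto | simpl in H0; tauto].
    simpl in H0. apply Rbar_le_eps. intros e He. set (tau := a + e).
    unfold h2. apply inf_le. exists tau. split; auto. split; [unfold tau; lra|]. intros v Hv Hvn.
    assert (Hs : Rbar_le (Rbar_inf (fun t => exists lam, lim_normal C (f x) lam /\ mtapply (Df x) lam = v /\ t = Finite (vnorm lam))) (Finite a)).
    { rewrite <- E. unfold h1. apply sup_ge. exists v; auto. }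
    destruct (inf_lt (fun t => exists lam, lim_normal C (f x) lam /\ mtapply (Df x) lam = v /\ t = Finite (vnorm lam)) tau) as [t [[lam [Hlam [Hlt ->]]] Hnt]].
    { intros Hc. pose proof (Rbar_le_trans _ _ _ Hc Hs). simpl in H. unfold tau in H. lra. }
    simpl in Hnt. exists (vscal (/ tau) lam). split; [apply lim_normal_cone; auto; left; apply Rinv_0_lt_compat; unfold tau; lra|].
    split.
    + rewrite vnorm_scal, Rabs_right by (left; apply Rinv_0_lt_compat; unfold tau; lra).
      apply (Rmult_le_reg_l tau); [unfold tau; lra|]. rewrite <- Rmult_assoc, Rinv_r by (unfold tau; lra). lra.
    + rewrite mtapply_scal, Hlt. unfold vscal. apply functional_extensionality; intro i. field. unfold tau; lra.
Qed.

Lemma h23 n l (f : vec n -> vec l) Df (C : vec l -> Prop) x : h2 f Df C x = h3 f Df C x.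
Proof. unfold h2, h3. f_equal. apply functional_extensionality; intro t. apply propositional_extensionality.
  split; intros [tau [Ht [Htau H]]]; exists tau; split; auto; split; auto; intros v Hv Hvn; destruct (H v Hv Hvn) as [lam H'].
  - destruct H' as [H1 [H2 H3]]. exists lam, (mtapply (Df x) lam). unfold coderivF. auto.
  - destruct H' as [w [H1 [[H2 H3] H4]]]. exists lam. subst. auto. Qed.

Lemma limsup_ext n (S : vec n -> Prop) xb (h h' : vec n -> Rbar) : (forall x, S x -> h x = h' x) ->
  limsup_at S xb h = limsup_at S xb h'.
Proof. intros H. unfold limsup_at. f_equal. apply functional_extensionality; intro t. apply propositional_extensionality.
  assert (E : forall eps, (fun s => exists x, S x /\ vnorm (vsub x xb) < eps /\ s = h x) =
                          (fun s => exists x, S x /\ vnorm (vsub x xb) < eps /\ s = h' x)).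
  { intros eps. apply functional_extensionality; intro s. apply propositional_extensionality.
    split; intros [x [Sx [Hx Hs]]]; exists x; split; auto; split; auto; rewrite Hs; [|symmetry]; apply H; auto. }
  split; intros [eps [He Ht]]; exists eps; split; auto; rewrite Ht, E; auto. Qed.

Theorem corollary3p4 (n l : nat) (f : vec n -> vec l) (Df : vec n -> mat l n)
  (C : vec l -> Prop) (xb : vec n) :
  is_C1 f Df ->
  is_closed C ->
  C (f xb) ->
  subamenable C (f xb) ->
  metric_subregular f (fun _ => True) C xb ->
  subreg_modulus f C xb = limsup_at (preimage f C) xb (h1 f Df C) /\
  subreg_modulus f C xb = limsup_at (preimage f C) xb (h2 f Df C) /\
  subreg_modulus f C xb = limsup_at (preimage f C) xb (h3 f Df C).
Proof.
  intros HC HCl Cxb Hsa _.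
  assert (E12 : limsup_at (preimage f C) xb (h1 f Df C) = limsup_at (preimage f C) xb (h2 f Df C)).
  { apply limsup_ext. intros x Sx. apply h12; auto. }
  assert (E23 : limsup_at (preimage f C) xb (h2 f Df C) = limsup_at (preimage f C) xb (h3 f Df C)).
  { apply limsup_ext. intros x Sx. apply h23. }
  assert (Main : subreg_modulus f C xb = limsup_at (preimage f C) xb (h1 f Df C)).
  2:{ rewrite <- E23, <- E12. auto. }
  apply Rbar_le_antisym.
  -
    assert (H0 : Rbar_le (Finite 0) (limsup_at (preimage f C) xb (h1 f Df C))).
    { unfold limsup_at. apply inf_ge. intros t [eps [He ->]].
      eapply Rbar_le_trans; [apply (h1_nonneg n l f Df C xb Cxb)|].
      apply sup_ge. exists xb. split; [unfold preimage; auto|]. split; [rewrite vnorm_sub_self; lra|reflexivity]. }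
    destruct (limsup_at (preimage f C) xb (h1 f Df C)) as [m| |] eqn:Em;
      [| destruct (subreg_modulus f C xb); simpl; auto | simpl in H0; tauto].
    simpl in H0. apply Rbar_le_eps. intros e He.
    set (k1 := m + e/2). set (k2 := m + e).
    destruct (inf_lt (fun t => exists eps, 0 < eps /\
        t = Rbar_sup (fun s => exists x, preimage f C x /\ vnorm (vsub x xb) < eps /\ s = h1 f Df C x)) k1)
      as [t [[eps [Heps ->]] Hnt]].
    { unfold limsup_at in Em. rewrite Em. simpl. unfold k1. lra. }
    assert (Hsb : subreg_bound f (fun _ => True) C xb k2).
    { apply (partB n l f Df C xb k1 k2 eps HC HCl Cxb Hsa); try (unfold k1, k2; lra); auto.
      intros x Cx Hx w Hw Hwn.
      set (F := fun t => exists lam, lim_normal C (f x) lam /\ mtapply (Df x) lam = w /\ t = Finite (vnorm lam)).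
      assert (Hle : Rbar_le (Rbar_inf F) (Rbar_sup (fun s => exists x, preimage f C x /\ vnorm (vsub x xb) < eps /\ s = h1 f Df C x))).
      { eapply Rbar_le_trans; [|apply sup_ge; exists x; split; [exact Cx|split; [exact Hx|reflexivity]]].
        unfold h1. apply sup_ge. exists w. auto. }
      destruct (inf_lt F k1) as [t' [[lam [Hlam [Hlt ->]]] Hnt']].
      { intros Hc. apply Hnt. eapply Rbar_le_trans; [apply Hc|apply Hle]. }
      exists lam. split; auto. split; auto. simpl in Hnt'. lra. }
    unfold subreg_modulus. apply inf_le. exists k2. split; auto. split; auto. unfold k2; lra.
  -
    unfold subreg_modulus. apply inf_ge. intros t [kappa [-> [Hk Hsb]]].
    destruct (partA n l f Df C xb kappa HC HCl Hk Hsb) as [eps [He HA]].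
    unfold limsup_at. eapply Rbar_le_trans; [apply inf_le; exists eps; split; [exact He|reflexivity]|].
    apply sup_le. intros s [x [Sx [Hx ->]]]. unfold h1. apply sup_le. intros s' [v [Hv [Hvn ->]]].
    destruct (HA x Sx Hx v Hv) as [lam [Hlam [Hlt Hln]]].
    eapply Rbar_le_trans; [apply inf_le; exists lam; split; [exact Hlam|split; [exact Hlt|reflexivity]]|].
    simpl. nra.
Qed.
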